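(* Let $\phi(x)$ be a formula of Peano Arithmetic (PA) with a single free variable $x$. Then there exist sentences (formulas with no free variables) $\sigma$ and $\tau$ of PA such that $$\mathrm{PA} \vdash \sigma \leftrightarrow \phi(\lceil \tau \rceil) \quad\text{and}\quad \mathrm{PA} \vdash \tau \leftrightarrow \lnot \phi(\lceil \sigma \rceil).$$
   Context: Peano Arithmetic (PA) is the first-order theory in the language with constant $0$, unary function symbol $S$ (successor), binary function symbols $+,*$, binary relation symbols $=,<,>$, the usual logical connectives and quantifiers, and variables $x_0,x_1,x_2,\dots$, with the standard axioms for successor, addition, multiplication, equality and the induction scheme. $\mathrm{PA}\vdash\chi$ means $\chi$ is derivable in PA. For a formula $\psi$, $\lceil \psi \rceil\in\mathbb{N}$ denotes its Gödel number under a fixed effective injective encoding of formulas by natural numbers (e.g. assign each symbol a positive integer code and map the string $s_1\cdots s_k$ with codes $n_1,\dots,n_k$ to $2^{n_1}3^{n_2}\cdots p_k^{n_k}$). When a natural number $n$ appears as an argument inside a PA formula, it stands for the numeral $S^{(n)}0 = S\cdots S0$ ($n$ copies of $S$); thus $\phi(\lceil\tau\rceil)$ is the result of substituting the numeral for $\lceil\tau\rceil$ for the free variable $x$ of $\phi$. *)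

(* Defs.v *)
From Stdlib Require Import Arith List Bool.

Inductive term : Type :=
| tvar : nat -> term
| tzero : term
| tsucc : term -> term
| tplus : term -> term -> term
| tmult : term -> term -> term.

Inductive form : Type :=
| feq : term -> term -> form
| flt : term -> term -> form
| fgt : term -> term -> form
| fneg : form -> form
| fimp : form -> form -> form
| fall : nat -> form -> form.

Definition fand (a b : form) : form := fneg (fimp a (fneg b)).
Definition for_ (a b : form) : form := fimp (fneg a) b.
Definition fiff (a b : form) : form := fand (fimp a b) (fimp b a).
Definition fex (x : nat) (a : form) : form := fneg (fall x (fneg a)).

Fixpoint occurs_t (x : nat) (t : term) : bool :=
  match t with
  | tvar y => Nat.eqb x y
  | tzero => false
  | tsucc s => occurs_t x s
  | tplus a b | tmult a b => occurs_t x a || occurs_t x b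
  end.

Fixpoint free_in (x : nat) (f : form) : bool :=
  match f with
  | feq a b | flt a b | fgt a b => occurs_t x a || occurs_t x b
  | fneg g => free_in x g
  | fimp g h => free_in x g || free_in x h
  | fall y g => negb (Nat.eqb x y) && free_in x g
  end.

Definition sentence (f : form) : Prop := forall x, free_in x f = false.

Fixpoint subst_t (x : nat) (s t : term) : term :=
  match t with
  | tvar y => if Nat.eqb x y then s else tvar y
  | tzero => tzero
  | tsucc u => tsucc (subst_t x s u)
  | tplus a b => tplus (subst_t x s a) (subst_t x s b)
  | tmult a b => tmult (subst_t x s a) (subst_t x s b)
  end.

Fixpoint subst (x : nat) (s : term) (f : form) : form :=
  match f with
  | feq a b => feq (subst_t x s a) (subst_t x s b)
  | flt a b => flt (subst_t x s a) (subst_t x s b)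
  | fgt a b => fgt (subst_t x s a) (subst_t x s b)
  | fneg g => fneg (subst x s g)
  | fimp g h => fimp (subst x s g) (subst x s h)
  | fall y g => if Nat.eqb x y then fall y g else fall y (subst x s g)
  end.

Fixpoint substitutable (x : nat) (t : term) (f : form) : Prop :=
  match f with
  | feq _ _ | flt _ _ | fgt _ _ => True
  | fneg g => substitutable x t g
  | fimp g h => substitutable x t g /\ substitutable x t h
  | fall y g => free_in x (fall y g) = false \/
                (occurs_t y t = false /\ substitutable x t g)
  end.

Fixpoint num (n : nat) : term :=
  match n with
  | 0 => tzero
  | S m => tsucc (num m)
  end.

Definition cpair (a b : nat) : nat := (a + b) * (a + b + 1) / 2 + b.

Fixpoint code_t (t : term) : nat :=
  match t with
  | tvar n => cpair 0 n
  | tzero => cpair 1 0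
  | tsucc s => cpair 2 (code_t s)
  | tplus a b => cpair 3 (cpair (code_t a) (code_t b))
  | tmult a b => cpair 4 (cpair (code_t a) (code_t b))
  end.

Fixpoint code (f : form) : nat :=
  match f with
  | feq a b => cpair 0 (cpair (code_t a) (code_t b))
  | flt a b => cpair 1 (cpair (code_t a) (code_t b))
  | fgt a b => cpair 2 (cpair (code_t a) (code_t b))
  | fneg g => cpair 3 (code g)
  | fimp g h => cpair 4 (cpair (code g) (code h))
  | fall y g => cpair 5 (cpair y (code g))
  end.

Definition x0 := tvar 0.
Definition x1 := tvar 1.
Definition x2 := tvar 2.

Inductive logical_axiom : form -> Prop :=
| LA1 : forall a b, logical_axiom (fimp a (fimp b a))
| LA2 : forall a b c,
    logical_axiom (fimp (fimp a (fimp b c)) (fimp (fimp a b) (fimp a c)))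
| LA3 : forall a b,
    logical_axiom (fimp (fimp (fneg b) (fneg a)) (fimp (fimp (fneg b) a) b))
| LA4 : forall x t a, substitutable x t a ->
    logical_axiom (fimp (fall x a) (subst x t a))
| LA5 : forall x a b, free_in x a = false ->
    logical_axiom (fimp (fall x (fimp a b)) (fimp a (fall x b)))
| LEq_refl : logical_axiom (feq x0 x0)
| LEq_eq : logical_axiom (fimp (feq x0 x1) (fimp (feq x0 x2) (feq x1 x2)))
| LEq_succ : logical_axiom (fimp (feq x0 x1) (feq (tsucc x0) (tsucc x1)))
| LEq_plusl : logical_axiom (fimp (feq x0 x1) (feq (tplus x0 x2) (tplus x1 x2)))
| LEq_plusr : logical_axiom (fimp (feq x0 x1) (feq (tplus x2 x0) (tplus x2 x1)))
| LEq_multl : logical_axiom (fimp (feq x0 x1) (feq (tmult x0 x2) (tmult x1 x2)))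
| LEq_multr : logical_axiom (fimp (feq x0 x1) (feq (tmult x2 x0) (tmult x2 x1)))
| LEq_ltl : logical_axiom (fimp (feq x0 x1) (fimp (flt x0 x2) (flt x1 x2)))
| LEq_ltr : logical_axiom (fimp (feq x0 x1) (fimp (flt x2 x0) (flt x2 x1)))
| LEq_gtl : logical_axiom (fimp (feq x0 x1) (fimp (fgt x0 x2) (fgt x1 x2)))
| LEq_gtr : logical_axiom (fimp (feq x0 x1) (fimp (fgt x2 x0) (fgt x2 x1))).

(** Nonlogical axioms of PA (free variables implicitly universally closed via Gen). *)
Inductive PA_axiom : form -> Prop :=
| PA_succ0 : PA_axiom (fneg (feq (tsucc x0) tzero))
| PA_succinj : PA_axiom (fimp (feq (tsucc x0) (tsucc x1)) (feq x0 x1))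
| PA_plus0 : PA_axiom (feq (tplus x0 tzero) x0)
| PA_plusS : PA_axiom (feq (tplus x0 (tsucc x1)) (tsucc (tplus x0 x1)))
| PA_mult0 : PA_axiom (feq (tmult x0 tzero) tzero)
| PA_multS : PA_axiom (feq (tmult x0 (tsucc x1)) (tplus (tmult x0 x1) x0))
| PA_lt : PA_axiom (fiff (flt x0 x1) (fex 2 (feq (tplus x0 (tsucc x2)) x1)))
| PA_gt : PA_axiom (fiff (fgt x0 x1) (flt x1 x0))
| PA_ind : forall x a,
    PA_axiom (fimp (subst x tzero a)
               (fimp (fall x (fimp a (subst x (tsucc (tvar x)) a))) (fall x a))).

Inductive PA_proves : form -> Prop :=
| Pr_log : forall a, logical_axiom a -> PA_proves a
| Pr_ax : forall a, PA_axiom a -> PA_proves a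
| Pr_mp : forall a b, PA_proves (fimp a b) -> PA_proves a -> PA_proves b
| Pr_gen : forall x a, PA_proves a -> PA_proves (fall x a).

(* Main.v *)
Require Import Defs.
From Stdlib Require Import Arith List Bool Lia Classical.
Import ListNotations.


Notation "|- A" := (PA_proves A) (at level 70).

Lemma mp A B : |- fimp A B -> |- A -> |- B.
Proof. intros; eapply Pr_mp; eauto. Qed.

Lemma ax1 A B : |- fimp A (fimp B A).
Proof. apply Pr_log; constructor. Qed.
Lemma ax2 A B C : |- fimp (fimp A (fimp B C)) (fimp (fimp A B) (fimp A C)).
Proof. apply Pr_log; constructor. Qed.
Lemma ax3 A B : |- fimp (fimp (fneg B) (fneg A)) (fimp (fimp (fneg B) A) B).
Proof. apply Pr_log; constructor. Qed.

Lemma imp_refl A : |- fimp A A.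
Proof.
  eapply mp. eapply mp. apply (ax2 A (fimp A A) A). apply ax1. apply (ax1 A A).
Qed.

Inductive Der (G : list form) : form -> Prop :=
| Dhyp A : In A G -> Der G A
| Dthm A : |- A -> Der G A
| Dmp A B : Der G (fimp A B) -> Der G A -> Der G B.

Lemma deduction G A B : Der (A :: G) B -> Der G (fimp A B).
Proof.
  induction 1.
  - destruct H as [<-|H]. apply Dthm, imp_refl.
    eapply Dmp. apply Dthm, ax1. now apply Dhyp.
  - eapply Dmp. apply Dthm, ax1. now apply Dthm.
  - eapply Dmp. eapply Dmp. apply Dthm, ax2. eauto. eauto.
Qed.

Lemma Der_weak G G' A : Der G A -> incl G G' -> Der G' A.
Proof. induction 1; intros; [apply Dhyp; auto|apply Dthm; auto|eapply Dmp; eauto]. Qed.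

Lemma Der_nil A : Der [] A -> |- A.
Proof. induction 1; [destruct H|auto|eapply mp; eauto]. Qed.

Lemma Dmp2 G A B : Der G (fimp A B) -> Der G A -> Der G B.
Proof. apply Dmp. Qed.

Lemma l_negneg_elim A : |- fimp (fneg (fneg A)) A.
Proof.
  apply Der_nil, deduction.
  eapply Dmp. eapply Dmp. apply Dthm, (ax3 (fneg A) A).
  - eapply Dmp. apply Dthm, ax1. now apply Dhyp; left.
  - apply Dthm, imp_refl.
Qed.

Lemma l_negneg_intro A : |- fimp A (fneg (fneg A)).
Proof.
  apply Der_nil, deduction.
  eapply Dmp. eapply Dmp. apply Dthm, (ax3 A (fneg (fneg A))).
  - apply Dthm, l_negneg_elim.
  - eapply Dmp. apply Dthm, ax1. now apply Dhyp; left.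
Qed.

Lemma l_efq A B : |- fimp (fneg A) (fimp A B).
Proof.
  apply Der_nil, deduction, deduction.
  eapply Dmp. eapply Dmp. apply Dthm, (ax3 A B).
  - eapply Dmp. apply Dthm, ax1. now apply Dhyp; right; left.
  - eapply Dmp. apply Dthm, ax1. now apply Dhyp; left.
Qed.

Lemma l_contra A B : |- fimp (fimp (fneg B) (fneg A)) (fimp A B).
Proof.
  apply Der_nil, deduction, deduction.
  eapply Dmp. eapply Dmp. apply Dthm, (ax3 A B).
  - now apply Dhyp; right; left.
  - eapply Dmp. apply Dthm, ax1. now apply Dhyp; left.
Qed.

Lemma l_contra2 A B : |- fimp (fimp A B) (fimp (fneg B) (fneg A)).
Proof.
  apply Der_nil, deduction.
  eapply Dmp. apply Dthm, l_contra.
  apply deduction.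
  eapply Dmp. apply Dthm, l_negneg_intro.
  eapply Dmp. now apply Dhyp; right; left.
  eapply Dmp. apply Dthm, l_negneg_elim. now apply Dhyp; left.
Qed.

Lemma l_imp_neg A B : |- fimp A (fimp (fneg B) (fneg (fimp A B))).
Proof.
  apply Der_nil, deduction.
  eapply Dmp. apply Dthm, l_contra2.
  apply deduction. eapply Dmp. now apply Dhyp; left. now apply Dhyp; right; left.
Qed.

Lemma l_cases A B : |- fimp (fimp A B) (fimp (fimp (fneg A) B) B).
Proof.
  apply Der_nil, deduction, deduction.
  eapply Dmp. eapply Dmp. apply Dthm, (ax3 (fneg A) B).
  - eapply Dmp. apply Dthm, l_contra2. now apply Dhyp; left.
  - eapply Dmp. apply Dthm, l_contra2. now apply Dhyp; right; left.
Qed.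

Inductive pf := PV (n : nat) | PN (p : pf) | PI (p q : pf).

Fixpoint pint (l : list form) (p : pf) : form :=
  match p with
  | PV n => nth n l (feq tzero tzero)
  | PN p => fneg (pint l p)
  | PI p q => fimp (pint l p) (pint l q)
  end.

Fixpoint peval (bs : list bool) (p : pf) : bool :=
  match p with
  | PV n => nth n bs false
  | PN p => negb (peval bs p)
  | PI p q => implb (peval bs p) (peval bs q)
  end.

Fixpoint pmax (p : pf) : nat :=
  match p with PV n => S n | PN p => pmax p | PI p q => max (pmax p) (pmax q) end.

Fixpoint chk (n : nat) (p : pf) (bs : list bool) : bool :=
  match n with
  | 0 => peval bs p
  | S n => chk n p (bs ++ [true]) && chk n p (bs ++ [false])
  end.

Definition lit (b : bool) (A : form) := if b then A else fneg A.

Definition lits (l : list form) (bs : list bool) : list form :=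
  map (fun i => lit (nth i bs false) (nth i l (feq tzero tzero))) (rev (seq 0 (length bs))).

Lemma lits_app l bs b : lits l (bs ++ [b]) = lit b (nth (length bs) l (feq tzero tzero)) :: lits l bs.
Proof.
  unfold lits. rewrite length_app. simpl. rewrite Nat.add_1_r, seq_S, rev_app_distr. simpl.
  rewrite app_nth2, Nat.sub_diag by lia. simpl. f_equal.
  apply map_ext_in. intros i Hi. rewrite <- in_rev, in_seq in Hi. rewrite app_nth1 by lia. auto.
Qed.

Lemma kalmar l bs p : pmax p <= length bs -> Der (lits l bs) (lit (peval bs p) (pint l p)).
Proof.
  induction p; simpl; intros H.
  - apply Dhyp. unfold lits. apply in_map_iff. exists n. split; auto.
    rewrite <- in_rev. apply in_seq. lia.
  - specialize (IHp H). destruct (peval bs p); simpl in *.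
    + eapply Dmp. apply Dthm, l_negneg_intro. auto.
    + auto.
  - assert (H1 : pmax p1 <= length bs) by lia. assert (H2 : pmax p2 <= length bs) by lia.
    specialize (IHp1 H1). specialize (IHp2 H2).
    destruct (peval bs p1), (peval bs p2); simpl in *.
    + eapply Dmp. apply Dthm, ax1. auto.
    + eapply Dmp. eapply Dmp. apply Dthm, l_imp_neg. auto. auto.
    + eapply Dmp. apply Dthm, ax1. auto.
    + eapply Dmp. apply Dthm, l_efq. auto.
Qed.

Lemma chk_ok l n p bs : pmax p <= length bs + n -> chk n p bs = true -> Der (lits l bs) (pint l p).
Proof.
  revert bs; induction n; simpl; intros bs Hm Hc.
  - pose proof (kalmar l bs p ltac:(lia)). rewrite Hc in H. exact H.
  - apply andb_true_iff in Hc as [Ht Hf].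
    assert (Ha : forall b, pmax p <= length (bs ++ [b]) + n) by (intros; rewrite length_app; simpl; lia).
    pose proof (IHn _ (Ha true) Ht) as D1. pose proof (IHn _ (Ha false) Hf) as D2.
    rewrite lits_app in D1, D2. simpl in D1, D2.
    apply deduction in D1. apply deduction in D2.
    eapply Dmp. eapply Dmp. apply Dthm, l_cases. exact D1. exact D2.
Qed.

Lemma taut_ok l p : chk (pmax p) p [] = true -> |- pint l p.
Proof. intros H. apply Der_nil. apply (chk_ok l (pmax p) p []); simpl; auto. Qed.

Ltac lookup_atom a l k :=
  lazymatch l with
  | nil => k 0 (cons a nil)
  | cons ?b ?l' =>
      tryif constr_eq a b then k 0 l
      else lookup_atom a l' ltac:(fun i l2 => k (S i) (cons b l2))
  end.

Ltac reify F l k :=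
  lazymatch F with
  | fimp ?a ?b => reify a l ltac:(fun pa l1 => reify b l1 ltac:(fun pb l2 => k (PI pa pb) l2))
  | fneg ?a => reify a l ltac:(fun pa l1 => k (PN pa) l1)
  | _ => lookup_atom F l ltac:(fun i l1 => k (PV i) l1)
  end.

Ltac taut :=
  repeat match goal with X := _ |- _ => progress (unfold X) end;
  unfold fiff, fand, for_, fex;
  lazymatch goal with
  | |- PA_proves ?F =>
    reify F (@nil form) ltac:(fun p l =>
      change (PA_proves (pint l p)); apply (taut_ok l p); vm_compute; reflexivity)
  end.

(* use: from |- A1, ..., |- An conclude B when A1 -> ... -> An -> B is a tautology *)
Ltac tapply H := eapply mp; [|exact H].
Lemma taut_test A B C : |- fimp (fimp A B) (fimp (fimp B C) (fimp A C)).
Proof. taut. Qed.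


Lemma subst_t_noocc y s t : occurs_t y t = false -> subst_t y s t = t.
Proof.
  induction t; simpl; intros H; try rewrite orb_false_iff in H; try tauto;
  try (f_equal; tauto).
  rewrite H; auto.
Qed.

Lemma subst_nofree y s f : free_in y f = false -> subst y s f = f.
Proof.
  induction f; simpl; intros H; try rewrite orb_false_iff in H;
  try (f_equal; try apply subst_t_noocc; tauto).
  destruct (Nat.eqb y n) eqn:E; auto. simpl in H. f_equal; auto.
Qed.

Definition closed_t t := forall y, occurs_t y t = false.

Lemma num_closed n : closed_t (num n).
Proof. induction n; intros y; simpl; auto. Qed.

Lemma substitutable_closed x t f : closed_t t -> substitutable x t f.
Proof. intros C; induction f; simpl; auto. Qed.

Lemma substitutable_self x f : substitutable x (tvar x) f.
Proof.
  induction f; simpl; auto.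
  destruct (Nat.eqb_spec x n).
  - left. reflexivity.
  - right. split; auto. apply Nat.eqb_neq; auto.
Qed.

Lemma subst_t_self x t : subst_t x (tvar x) t = t.
Proof. induction t; simpl; try congruence. destruct (Nat.eqb_spec x n); congruence. Qed.

Lemma subst_self x f : subst x (tvar x) f = f.
Proof. induction f; simpl; try rewrite !subst_t_self; try congruence. destruct (Nat.eqb x n); congruence. Qed.

Lemma gen x A : |- A -> |- fall x A.
Proof. apply Pr_gen. Qed.

Lemma la4 x t A : substitutable x t A -> |- fimp (fall x A) (subst x t A).
Proof. intros; apply Pr_log; constructor; auto. Qed.

Lemma la5 x A B : free_in x A = false -> |- fimp (fall x (fimp A B)) (fimp A (fall x B)).
Proof. intros; apply Pr_log; constructor; auto. Qed.

Lemma inst x t A : substitutable x t A -> |- A -> |- subst x t A.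
Proof. intros. eapply mp. apply la4; auto. apply gen; auto. Qed.

Lemma inst_closed x t A : closed_t t -> |- A -> |- subst x t A.
Proof. intros; apply inst; auto; apply substitutable_closed; auto. Qed.

Lemma all_elim x A : |- fimp (fall x A) A.
Proof. pose proof (la4 x (tvar x) A (substitutable_self x A)). rewrite subst_self in H. auto. Qed.

Lemma all_intro x A B : free_in x A = false -> |- fimp A B -> |- fimp A (fall x B).
Proof. intros. eapply mp. apply la5; auto. apply gen; auto. Qed.

Lemma all_dist y A B : |- fimp (fall y (fimp A B)) (fimp (fall y A) (fall y B)).
Proof.
  assert (H : |- fimp (fand (fall y (fimp A B)) (fall y A)) B).
  { pose proof (all_elim y (fimp A B)). pose proof (all_elim y A).
    eapply mp. eapply mp. 2: exact H. 2: exact H0. taut. }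
  apply all_intro with (x := y) in H.
  - eapply mp. 2: exact H. taut.
  - simpl. rewrite Nat.eqb_refl. auto.
Qed.

Lemma all_mono y A B : |- fimp A B -> |- fimp (fall y A) (fall y B).
Proof. intros. eapply mp. apply all_dist. apply gen; auto. Qed.

Lemma ex_intro x t A : substitutable x t A -> |- fimp (subst x t A) (fex x A).
Proof.
  intros H. unfold fex. pose proof (la4 x t (fneg A) H). simpl in H0.
  eapply mp. 2: exact H0. taut.
Qed.

Lemma ex_elim x A B : free_in x B = false -> |- fimp A B -> |- fimp (fex x A) B.
Proof.
  intros Hf H. unfold fex.
  assert (H1 : |- fimp (fneg B) (fneg A)) by (eapply mp; [|exact H]; taut).
  apply all_intro with (x := x) in H1; [|simpl; auto].
  eapply mp. 2: exact H1. taut.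
Qed.

Fixpoint tmax (t : term) : nat :=
  match t with
  | tvar n => S n
  | tzero => 0
  | tsucc s => tmax s
  | tplus a b | tmult a b => max (tmax a) (tmax b)
  end.

Lemma tmax_occ y t : tmax t <= y -> occurs_t y t = false.
Proof.
  induction t; simpl; intros; auto.
  - apply Nat.eqb_neq. lia.
  - rewrite IHt1, IHt2 by lia; auto.
  - rewrite IHt1, IHt2 by lia; auto.
Qed.

Fixpoint qf (f : form) : Prop :=
  match f with
  | feq _ _ | flt _ _ | fgt _ _ => True
  | fneg g => qf g
  | fimp g h => qf g /\ qf h
  | fall _ _ => False
  end.

Lemma substitutable_qf x t f : qf f -> substitutable x t f.
Proof. induction f; simpl; tauto. Qed.

Lemma inst_qf x t f : qf f -> |- f -> |- subst x t f.
Proof. intros; apply inst; auto; apply substitutable_qf; auto. Qed.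

Definition s3 (s t r : term) (y : nat) : term :=
  match y with 0 => s | 1 => t | 2 => r | _ => tvar y end.

Fixpoint tsub3 s t r (T : term) : term :=
  match T with
  | tvar y => s3 s t r y
  | tzero => tzero
  | tsucc a => tsucc (tsub3 s t r a)
  | tplus a b => tplus (tsub3 s t r a) (tsub3 s t r b)
  | tmult a b => tmult (tsub3 s t r a) (tsub3 s t r b)
  end.

Fixpoint fsub3 s t r (f : form) : form :=
  match f with
  | feq a b => feq (tsub3 s t r a) (tsub3 s t r b)
  | flt a b => flt (tsub3 s t r a) (tsub3 s t r b)
  | fgt a b => fgt (tsub3 s t r a) (tsub3 s t r b)
  | fneg g => fneg (fsub3 s t r g)
  | fimp g h => fimp (fsub3 s t r g) (fsub3 s t r h)
  | fall y g => fall y g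
  end.

Fixpoint tvars3 (T : term) : Prop :=
  match T with
  | tvar y => y < 3
  | tzero => True
  | tsucc a => tvars3 a
  | tplus a b | tmult a b => tvars3 a /\ tvars3 b
  end.

Fixpoint fvars3 (f : form) : Prop :=
  match f with
  | feq a b | flt a b | fgt a b => tvars3 a /\ tvars3 b
  | fneg g => fvars3 g
  | fimp g h => fvars3 g /\ fvars3 h
  | fall _ _ => False
  end.

Lemma tsub3_chain s t r T F :
  3 + tmax s + tmax t + tmax r <= F -> tvars3 T ->
  subst_t (F+2) r (subst_t (F+1) t (subst_t F s
    (subst_t 2 (tvar (F+2)) (subst_t 1 (tvar (F+1)) (subst_t 0 (tvar F) T)))))
  = tsub3 s t r T.
Proof.
  intros HF; induction T; simpl; intros HT; try (f_equal; tauto).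
  destruct n as [|[|[|n]]]; try lia; destruct F as [|[|[|G]]]; try lia;
  repeat (cbn; match goal with |- context [Nat.eqb ?a ?b] => destruct (Nat.eqb_spec a b); try lia end);
  rewrite ?(subst_t_noocc _ _ s), ?(subst_t_noocc _ _ t), ?(subst_t_noocc _ _ s) by (apply tmax_occ; lia); reflexivity.
Qed.

Lemma inst3 s t r f : qf f -> fvars3 f -> |- f -> |- fsub3 s t r f.
Proof.
  intros Hq Hv H.
  set (F := 3 + tmax s + tmax t + tmax r).
  assert (HF : 3 + tmax s + tmax t + tmax r <= F) by (unfold F; lia). clearbody F.
  assert (E : subst (F+2) r (subst (F+1) t (subst F s
    (subst 2 (tvar (F+2)) (subst 1 (tvar (F+1)) (subst 0 (tvar F) f))))) = fsub3 s t r f).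
  { clear H. revert Hq Hv. induction f; simpl in *; intros; try tauto;
    try (rewrite !tsub3_chain by (tauto || lia); auto).
    - f_equal; tauto.
    - f_equal; tauto. }
  rewrite <- E.
  assert (Q : forall x u g, qf g -> qf (subst x u g)).
  { intros x u g; induction g; simpl; tauto. }
  repeat apply inst_qf; repeat apply Q; auto.
Qed.

Ltac use3 ax s t r :=
  let H := fresh in
  pose proof ax as H; apply (inst3 s t r) in H;
  [simpl in H; exact H | simpl; tauto | simpl; repeat split; lia].

Lemma LA l : logical_axiom l -> |- l. Proof. apply Pr_log. Qed.
Lemma PAA l : PA_axiom l -> |- l. Proof. apply Pr_ax. Qed.

Lemma eq_refl' s : |- feq s s.
Proof. use3 (LA _ LEq_refl) s s s. Qed.
Lemma eq_eq s t r : |- fimp (feq s t) (fimp (feq s r) (feq t r)).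
Proof. use3 (LA _ LEq_eq) s t r. Qed.
Lemma eq_sym s t : |- fimp (feq s t) (feq t s).
Proof. pose proof (eq_eq s t s). pose proof (eq_refl' s). eapply mp. 2: exact H0. eapply mp. 2: exact H. taut. Qed.
Lemma eq_trans s t r : |- fimp (feq s t) (fimp (feq t r) (feq s r)).
Proof. pose proof (eq_eq t s r). pose proof (eq_sym s t). eapply mp. 2: exact H0. eapply mp. 2: exact H. taut. Qed.
Lemma eq_succ s t : |- fimp (feq s t) (feq (tsucc s) (tsucc t)).
Proof. use3 (LA _ LEq_succ) s t s. Qed.
Lemma eq_plusl s t r : |- fimp (feq s t) (feq (tplus s r) (tplus t r)).
Proof. use3 (LA _ LEq_plusl) s t r. Qed.
Lemma eq_plusr s t r : |- fimp (feq s t) (feq (tplus r s) (tplus r t)).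
Proof. use3 (LA _ LEq_plusr) s t r. Qed.
Lemma eq_multl s t r : |- fimp (feq s t) (feq (tmult s r) (tmult t r)).
Proof. use3 (LA _ LEq_multl) s t r. Qed.
Lemma eq_multr s t r : |- fimp (feq s t) (feq (tmult r s) (tmult r t)).
Proof. use3 (LA _ LEq_multr) s t r. Qed.
Lemma eq_ltl s t r : |- fimp (feq s t) (fimp (flt s r) (flt t r)).
Proof. use3 (LA _ LEq_ltl) s t r. Qed.
Lemma eq_ltr s t r : |- fimp (feq s t) (fimp (flt r s) (flt r t)).
Proof. use3 (LA _ LEq_ltr) s t r. Qed.
Lemma eq_gtl s t r : |- fimp (feq s t) (fimp (fgt s r) (fgt t r)).
Proof. use3 (LA _ LEq_gtl) s t r. Qed.
Lemma eq_gtr s t r : |- fimp (feq s t) (fimp (fgt r s) (fgt r t)).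
Proof. use3 (LA _ LEq_gtr) s t r. Qed.

Lemma ax_succ0 s : |- fneg (feq (tsucc s) tzero).
Proof. use3 (PAA _ PA_succ0) s s s. Qed.
Lemma ax_succinj s t : |- fimp (feq (tsucc s) (tsucc t)) (feq s t).
Proof. use3 (PAA _ PA_succinj) s t s. Qed.
Lemma ax_plus0 s : |- feq (tplus s tzero) s.
Proof. use3 (PAA _ PA_plus0) s s s. Qed.
Lemma ax_plusS s t : |- feq (tplus s (tsucc t)) (tsucc (tplus s t)).
Proof. use3 (PAA _ PA_plusS) s t s. Qed.
Lemma ax_mult0 s : |- feq (tmult s tzero) tzero.
Proof. use3 (PAA _ PA_mult0) s s s. Qed.
Lemma ax_multS s t : |- feq (tmult s (tsucc t)) (tplus (tmult s t) s).
Proof. use3 (PAA _ PA_multS) s t s. Qed.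


Ltac tcomb H := eapply mp; [|exact H].

Lemma tcong z s t T : |- fimp (feq s t) (feq (subst_t z s T) (subst_t z t T)).
Proof.
  induction T; simpl.
  - destruct (Nat.eqb z n). apply imp_refl. pose proof (eq_refl' (tvar n)). tcomb H. taut.
  - pose proof (eq_refl' tzero). tcomb H. taut.
  - pose proof (eq_succ (subst_t z s T) (subst_t z t T)). tcomb H. tcomb IHT. taut.
  - pose proof (eq_plusl (subst_t z s T1) (subst_t z t T1) (subst_t z s T2)).
    pose proof (eq_plusr (subst_t z s T2) (subst_t z t T2) (subst_t z t T1)).
    pose proof (eq_trans (tplus (subst_t z s T1) (subst_t z s T2)) (tplus (subst_t z t T1) (subst_t z s T2)) (tplus (subst_t z t T1) (subst_t z t T2))).
    tcomb H; tcomb H0; tcomb H1; tcomb IHT1; tcomb IHT2; taut.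
  - pose proof (eq_multl (subst_t z s T1) (subst_t z t T1) (subst_t z s T2)).
    pose proof (eq_multr (subst_t z s T2) (subst_t z t T2) (subst_t z t T1)).
    pose proof (eq_trans (tmult (subst_t z s T1) (subst_t z s T2)) (tmult (subst_t z t T1) (subst_t z s T2)) (tmult (subst_t z t T1) (subst_t z t T2))).
    tcomb H; tcomb H0; tcomb H1; tcomb IHT1; tcomb IHT2; taut.
Qed.

Lemma leib f : forall z s t, substitutable z s f -> substitutable z t f ->
  |- fimp (feq s t) (fimp (subst z s f) (subst z t f)).
Proof.
  induction f; intros z s u Hs Hu; simpl in *.
  - pose proof (tcong z s u t). pose proof (tcong z s u t0).
    pose proof (eq_sym (subst_t z s t) (subst_t z u t)).
    pose proof (eq_trans (subst_t z u t) (subst_t z s t) (subst_t z s t0)).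
    pose proof (eq_trans (subst_t z u t) (subst_t z s t0) (subst_t z u t0)).
    tcomb H; tcomb H0; tcomb H1; tcomb H2; tcomb H3; taut.
  - pose proof (tcong z s u t). pose proof (tcong z s u t0).
    pose proof (eq_ltl (subst_t z s t) (subst_t z u t) (subst_t z s t0)).
    pose proof (eq_ltr (subst_t z s t0) (subst_t z u t0) (subst_t z u t)).
    tcomb H; tcomb H0; tcomb H1; tcomb H2; taut.
  - pose proof (tcong z s u t). pose proof (tcong z s u t0).
    pose proof (eq_gtl (subst_t z s t) (subst_t z u t) (subst_t z s t0)).
    pose proof (eq_gtr (subst_t z s t0) (subst_t z u t0) (subst_t z u t)).
    tcomb H; tcomb H0; tcomb H1; tcomb H2; taut.
  - pose proof (IHf z u s Hu Hs). pose proof (eq_sym s u). tcomb H; tcomb H0; taut.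
  - destruct Hs, Hu. pose proof (IHf1 z u s H1 H). pose proof (IHf2 z s u H0 H2).
    pose proof (eq_sym s u). tcomb H3; tcomb H4; tcomb H5; taut.
  - destruct (free_in z (fall n f)) eqn:Fr.
    + pose proof Fr as Fr'. simpl in Fr'. destruct Hs as [Hs|[Hs1 Hs2]]; [congruence|].
      destruct Hu as [Hu|[Hu1 Hu2]]; [congruence|].
      simpl in Fr. destruct (Nat.eqb z n) eqn:E; [simpl in Fr; congruence|].
      pose proof (IHf z s u Hs2 Hu2).
      apply all_intro with (x := n) in H; [|simpl; rewrite Hs1, Hu1; auto].
      pose proof (all_dist n (subst z s f) (subst z u f)).
      tcomb H; tcomb H0; taut.
    + pose proof (subst_nofree z s _ Fr). pose proof (subst_nofree z u _ Fr).
      simpl in H, H0. rewrite H, H0. pose proof (imp_refl (fall n f)). tcomb H1. taut.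
Qed.

Lemma num_plus m n : |- feq (tplus (num m) (num n)) (num (m + n)).
Proof.
  induction n; simpl.
  - rewrite Nat.add_0_r. apply ax_plus0.
  - rewrite Nat.add_succ_r. simpl.
    pose proof (ax_plusS (num m) (num n)).
    pose proof (eq_succ (tplus (num m) (num n)) (num (m + n))).
    pose proof (eq_trans (tplus (num m) (tsucc (num n))) (tsucc (tplus (num m) (num n))) (tsucc (num (m+n)))).
    tcomb H; tcomb H0; tcomb H1; tcomb IHn; taut.
Qed.

Lemma num_mult m n : |- feq (tmult (num m) (num n)) (num (m * n)).
Proof.
  induction n; simpl.
  - rewrite Nat.mul_0_r. apply ax_mult0.
  - rewrite Nat.mul_succ_r.
    pose proof (ax_multS (num m) (num n)).
    pose proof (eq_plusl (tmult (num m) (num n)) (num (m * n)) (num m)).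
    pose proof (num_plus (m * n) m).
    pose proof (eq_trans (tmult (num m) (tsucc (num n))) (tplus (tmult (num m) (num n)) (num m)) (tplus (num (m * n)) (num m))).
    pose proof (eq_trans (tmult (num m) (tsucc (num n))) (tplus (num (m * n)) (num m)) (num (m * n + m))).
    tcomb H; tcomb H0; tcomb H1; tcomb H2; tcomb H3; tcomb IHn; taut.
Qed.

Lemma num_neq a b : a <> b -> |- fneg (feq (num a) (num b)).
Proof.
  revert b; induction a; intros [|b] H; simpl; try congruence.
  - pose proof (ax_succ0 (num b)). pose proof (eq_sym tzero (tsucc (num b))). tcomb H0; tcomb H1; taut.
  - apply ax_succ0.
  - pose proof (IHa b ltac:(congruence)). pose proof (ax_succinj (num a) (num b)). tcomb H0; tcomb H1; taut.
Qed.

Definition upd (r : nat -> term) (z : nat) (t : term) : nat -> term :=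
  fun y => if Nat.eqb y z then t else r y.

Fixpoint tsubst (r : nat -> term) (t : term) : term :=
  match t with
  | tvar y => r y
  | tzero => tzero
  | tsucc a => tsucc (tsubst r a)
  | tplus a b => tplus (tsubst r a) (tsubst r b)
  | tmult a b => tmult (tsubst r a) (tsubst r b)
  end.

Fixpoint fsubst (r : nat -> term) (f : form) : form :=
  match f with
  | feq a b => feq (tsubst r a) (tsubst r b)
  | flt a b => flt (tsubst r a) (tsubst r b)
  | fgt a b => fgt (tsubst r a) (tsubst r b)
  | fneg g => fneg (fsubst r g)
  | fimp g h => fimp (fsubst r g) (fsubst r h)
  | fall z g => fall z (fsubst (upd r z (tvar z)) g)
  end.

Fixpoint tval (e : nat -> nat) (t : term) : nat :=
  match t with
  | tvar y => e y
  | tzero => 0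
  | tsucc a => S (tval e a)
  | tplus a b => tval e a + tval e b
  | tmult a b => tval e a * tval e b
  end.

Definition nenv (e : nat -> nat) : nat -> term := fun y => num (e y).

Lemma tsubst_eval e t : |- feq (tsubst (nenv e) t) (num (tval e t)).
Proof.
  induction t; simpl.
  - apply eq_refl'.
  - apply eq_refl'.
  - exact (mp _ _ (eq_succ _ _) IHt).
  - pose proof (eq_plusl (tsubst (nenv e) t1) (num (tval e t1)) (tsubst (nenv e) t2)).
    pose proof (eq_plusr (tsubst (nenv e) t2) (num (tval e t2)) (num (tval e t1))).
    pose proof (num_plus (tval e t1) (tval e t2)).
    pose proof (eq_trans (tplus (tsubst (nenv e) t1) (tsubst (nenv e) t2)) (tplus (num (tval e t1)) (tsubst (nenv e) t2)) (tplus (num (tval e t1)) (num (tval e t2)))).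
    pose proof (eq_trans (tplus (tsubst (nenv e) t1) (tsubst (nenv e) t2)) (tplus (num (tval e t1)) (num (tval e t2))) (num (tval e t1 + tval e t2))).
    tcomb H; tcomb H0; tcomb H1; tcomb H2; tcomb H3; tcomb IHt1; tcomb IHt2; taut.
  - pose proof (eq_multl (tsubst (nenv e) t1) (num (tval e t1)) (tsubst (nenv e) t2)).
    pose proof (eq_multr (tsubst (nenv e) t2) (num (tval e t2)) (num (tval e t1))).
    pose proof (num_mult (tval e t1) (tval e t2)).
    pose proof (eq_trans (tmult (tsubst (nenv e) t1) (tsubst (nenv e) t2)) (tmult (num (tval e t1)) (tsubst (nenv e) t2)) (tmult (num (tval e t1)) (num (tval e t2)))).
    pose proof (eq_trans (tmult (tsubst (nenv e) t1) (tsubst (nenv e) t2)) (tmult (num (tval e t1)) (num (tval e t2))) (num (tval e t1 * tval e t2))).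
    tcomb H; tcomb H0; tcomb H1; tcomb H2; tcomb H3; tcomb IHt1; tcomb IHt2; taut.
Qed.


Ltac eqbs := repeat (cbn -[Nat.eqb]; match goal with |- context [Nat.eqb ?a ?b] => destruct (Nat.eqb_spec a b); try lia; try congruence end).

Lemma ind x a : |- subst x tzero a -> |- fall x (fimp a (subst x (tsucc (tvar x)) a)) -> |- fall x a.
Proof. intros. eapply mp. eapply mp. apply PAA, PA_ind. auto. auto. Qed.

Lemma ind' x a : |- subst x tzero a -> |- fimp a (subst x (tsucc (tvar x)) a) -> |- a.
Proof. intros. eapply mp. apply all_elim with (x := x). apply ind; auto. apply gen; auto. Qed.

Definition FF := fneg (feq tzero tzero).
Lemma FF_ref : |- fneg FF.
Proof. pose proof (eq_refl' tzero). tcomb H. unfold FF. taut. Qed.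

Lemma zcase_var w v : w <> v ->
  |- for_ (feq (tvar w) tzero) (fex v (feq (tvar w) (tsucc (tvar v)))).
Proof.
  intros Hwv. apply ind' with (x := w).
  - unfold for_, fex; eqbs. pose proof (eq_refl' tzero). tcomb H. taut.
  - unfold for_, fex; eqbs.
    pose proof (ex_intro v (tvar w) (feq (tsucc (tvar w)) (tsucc (tvar v))) ltac:(simpl; auto)).
    unfold fex in H. revert H; eqbs; intros H.
    pose proof (eq_refl' (tsucc (tvar w))). tcomb H; tcomb H0. taut.
Qed.

Lemma zcase s v : occurs_t v s = false ->
  |- for_ (feq s tzero) (fex v (feq s (tsucc (tvar v)))).
Proof.
  intros Hv. pose proof (zcase_var (S v) v ltac:(lia)).
  apply (inst (S v) s) in H.
  { unfold for_, fex in *. revert H; eqbs. }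
  unfold for_, fex; simpl. split; auto.
Qed.

Lemma zero_plus_var : |- feq (tplus tzero (tvar 0)) (tvar 0).
Proof.
  apply ind' with (x := 0); simpl.
  - apply ax_plus0.
  - pose proof (ax_plusS tzero (tvar 0)). pose proof (eq_succ (tplus tzero (tvar 0)) (tvar 0)).
    pose proof (eq_trans (tplus tzero (tsucc (tvar 0))) (tsucc (tplus tzero (tvar 0))) (tsucc (tvar 0))).
    tcomb H; tcomb H0; tcomb H1; taut.
Qed.

Lemma zero_plus s : |- feq (tplus tzero s) s.
Proof. use3 zero_plus_var s s s. Qed.

Lemma succ_plus_var : |- feq (tplus (tsucc (tvar 0)) (tvar 1)) (tsucc (tplus (tvar 0) (tvar 1))).
Proof.
  apply ind' with (x := 1); simpl.
  - pose proof (ax_plus0 (tsucc (tvar 0))). pose proof (ax_plus0 (tvar 0)).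
    pose proof (eq_succ (tplus (tvar 0) tzero) (tvar 0)).
    pose proof (eq_sym (tsucc (tplus (tvar 0) tzero)) (tsucc (tvar 0))).
    pose proof (eq_trans (tplus (tsucc (tvar 0)) tzero) (tsucc (tvar 0)) (tsucc (tplus (tvar 0) tzero))).
    tcomb H; tcomb H0; tcomb H1; tcomb H2; tcomb H3; taut.
  - set (x := tvar 0). set (w := tvar 1).
    pose proof (ax_plusS (tsucc x) w).
    pose proof (eq_succ (tplus (tsucc x) w) (tsucc (tplus x w))).
    pose proof (ax_plusS x w).
    pose proof (eq_succ (tplus x (tsucc w)) (tsucc (tplus x w))).
    pose proof (eq_sym (tsucc (tplus x (tsucc w))) (tsucc (tsucc (tplus x w)))).
    pose proof (eq_trans (tplus (tsucc x) (tsucc w)) (tsucc (tplus (tsucc x) w)) (tsucc (tsucc (tplus x w)))).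
    pose proof (eq_trans (tplus (tsucc x) (tsucc w)) (tsucc (tsucc (tplus x w))) (tsucc (tplus x (tsucc w)))).
    tcomb H; tcomb H0; tcomb H1; tcomb H2; tcomb H3; tcomb H4; tcomb H5; taut.
Qed.

Lemma succ_plus_swap_var : |- feq (tplus (tsucc (tvar 0)) (tvar 1)) (tplus (tvar 0) (tsucc (tvar 1))).
Proof.
  pose proof succ_plus_var. pose proof (ax_plusS (tvar 0) (tvar 1)).
  pose proof (eq_sym (tplus (tvar 0) (tsucc (tvar 1))) (tsucc (tplus (tvar 0) (tvar 1)))).
  pose proof (eq_trans (tplus (tsucc (tvar 0)) (tvar 1)) (tsucc (tplus (tvar 0) (tvar 1))) (tplus (tvar 0) (tsucc (tvar 1)))).
  tcomb H; tcomb H0; tcomb H1; tcomb H2; taut.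
Qed.

Lemma succ_plus_swap a b : |- feq (tplus (tsucc a) b) (tplus a (tsucc b)).
Proof. use3 succ_plus_swap_var a b b. Qed.

Definition ok12 (s : term) := occurs_t 1 s = false /\ occurs_t 2 s = false.

Lemma inst_all x t A : substitutable x t A -> |- fall x A -> |- subst x t A.
Proof. intros. eapply mp. apply la4; auto. auto. Qed.

Lemma lt_def s t : ok12 s -> ok12 t ->
  |- fiff (flt s t) (fex 2 (feq (tplus s (tsucc (tvar 2))) t)).
Proof.
  intros [Hs1 Hs2] [Ht1 Ht2].
  pose proof (PAA _ PA_lt). apply gen with (x := 1) in H. apply gen with (x := 0) in H.
  apply (inst_all 0 s) in H.
  2:{ unfold fiff, fand, fex, x0, x1, x2 in *; simpl in *. rewrite Hs1, Hs2. tauto. }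
  unfold fiff, fand, fex, x0, x1, x2 in *; simpl in *.
  apply (inst_all 1 t) in H.
  2:{ simpl. rewrite Ht2. tauto. }
  simpl in H. rewrite !subst_t_noocc in H by auto. exact H.
Qed.

Lemma lt_intro s r t : ok12 s -> ok12 t -> |- fimp (feq (tplus s (tsucc r)) t) (flt s t).
Proof.
  intros Hs Ht. pose proof (lt_def s t Hs Ht).
  pose proof (ex_intro 2 r (feq (tplus s (tsucc (tvar 2))) t) ltac:(simpl; auto)).
  simpl in H0. destruct Hs, Ht. rewrite !subst_t_noocc in H0 by auto.
  tcomb H; tcomb H0; taut.
Qed.

Lemma not_lt0 s : ok12 s -> |- fneg (flt s tzero).
Proof.
  intros Hs. pose proof (lt_def s tzero Hs ltac:(split; auto)).
  assert (H1 : |- fimp (feq (tplus s (tsucc (tvar 2))) tzero) FF).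
  { pose proof (ax_plusS s (tvar 2)). pose proof (ax_succ0 (tplus s (tvar 2))).
    pose proof (eq_sym (tplus s (tsucc (tvar 2))) (tsucc (tplus s (tvar 2)))).
    pose proof (eq_trans (tsucc (tplus s (tvar 2))) (tplus s (tsucc (tvar 2))) tzero).
    tcomb H0; tcomb H1; tcomb H2; tcomb H3; unfold FF; taut. }
  apply ex_elim with (x := 2) in H1; [|auto].
  pose proof FF_ref. tcomb H; tcomb H1; tcomb H0. taut.
Qed.

Lemma ok12_num n : ok12 (num n).
Proof. split; apply num_closed. Qed.

Lemma lt_succ s t : ok12 s -> ok12 t -> |- fimp (flt s (tsucc t)) (for_ (flt s t) (feq s t)).
Proof.
  intros Hs Ht. set (v := 3 + tmax s + tmax t).
  assert (Hvs : occurs_t v s = false) by (apply tmax_occ; unfold v; lia).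
  assert (Hvt : occurs_t v t = false) by (apply tmax_occ; unfold v; lia).
  assert (Hst : ok12 (tsucc t)) by (destruct Ht; split; simpl; auto).
  pose proof (lt_def s (tsucc t) Hs Hst) as D.
  set (x := tvar 2).
  set (B := for_ (flt s t) (feq s t)).
  assert (Main : |- fimp (feq (tplus s (tsucc x)) (tsucc t)) B).
  { pose proof (zcase x v ltac:(reflexivity)) as Z.
    pose proof (ax_plusS s x).
    pose proof (eq_sym (tplus s (tsucc x)) (tsucc (tplus s x))).
    pose proof (eq_trans (tsucc (tplus s x)) (tplus s (tsucc x)) (tsucc t)).
    pose proof (ax_succinj (tplus s x) t).
    pose proof (tcong 2 (tvar 2) tzero (tplus s (tvar 2))) as C0. simpl in C0.
    destruct Hs as [Hs1 Hs2]. repeat rewrite subst_t_noocc in C0 by assumption.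
    pose proof (ax_plus0 s).
    pose proof (eq_sym (tplus s x) (tplus s tzero)).
    pose proof (eq_trans (tplus s tzero) (tplus s x) t).
    pose proof (eq_sym (tplus s tzero) s).
    pose proof (eq_trans s (tplus s tzero) t).
    assert (CS : |- fimp (fex v (feq x (tsucc (tvar v)))) (fimp (feq (tplus s x) t) B)).
    { apply ex_elim.
      { unfold B, for_; simpl; rewrite Hvs, Hvt; auto. }
      pose proof (tcong 2 (tvar 2) (tsucc (tvar v)) (tplus s (tvar 2))) as C1. simpl in C1.
      repeat rewrite subst_t_noocc in C1 by assumption.
      pose proof (eq_sym (tplus s x) (tplus s (tsucc (tvar v)))).
      pose proof (eq_trans (tplus s (tsucc (tvar v))) (tplus s x) t).
      pose proof (lt_intro s (tvar v) t ltac:(split; auto) Ht).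
      tcomb C1; tcomb H8; tcomb H9; tcomb H10. unfold B. taut. }
    tcomb Z; tcomb H; tcomb H0; tcomb H1; tcomb H2; tcomb C0; tcomb H3; tcomb H4; tcomb H5;
    tcomb H6; tcomb H7; tcomb CS. unfold B. taut. }
  apply ex_elim with (x := 2) in Main.
  2:{ unfold B, for_; simpl. destruct Hs, Ht. rewrite H0, H2. auto. }
  tcomb D; tcomb Main. unfold B. taut.
Qed.

Lemma num_lt a b : a < b -> |- flt (num a) (num b).
Proof.
  intros H. pose proof (lt_intro (num a) (num (b - a - 1)) (num b) (ok12_num a) (ok12_num b)).
  pose proof (num_plus a (S (b - a - 1))). replace (a + S (b - a - 1)) with b in H1 by lia.
  simpl in H1. tcomb H0; tcomb H1; taut.
Qed.

Lemma num_nlt a b : b <= a -> |- fneg (flt (num a) (num b)).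
Proof.
  revert a; induction b; intros a H.
  - apply not_lt0, ok12_num.
  - pose proof (lt_succ (num a) (num b) (ok12_num a) (ok12_num b)).
    pose proof (IHb a ltac:(lia)). pose proof (num_neq a b ltac:(lia)).
    simpl. tcomb H0; tcomb H1; tcomb H2; taut.
Qed.

Lemma trich s n : ok12 s ->
  |- for_ (flt s (num n)) (for_ (feq s (num n)) (flt (num n) s)).
Proof.
  intros Hs. set (v := 3 + tmax s).
  assert (Hvs : occurs_t v s = false) by (apply tmax_occ; unfold v; lia).
  induction n.
  - simpl. pose proof (zcase s v Hvs) as Z.
    assert (CS : |- fimp (fex v (feq s (tsucc (tvar v)))) (flt tzero s)).
    { apply ex_elim. simpl; auto.
      pose proof (zero_plus (tsucc (tvar v))).
      pose proof (eq_sym s (tsucc (tvar v))).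
      pose proof (eq_trans (tplus tzero (tsucc (tvar v))) (tsucc (tvar v)) s).
      pose proof (lt_intro tzero (tvar v) s ltac:(split; auto) Hs).
      tcomb H; tcomb H0; tcomb H1; tcomb H2; taut. }
    tcomb Z; tcomb CS; taut.
  - simpl. set (m := num n) in *.
    assert (Hm : ok12 m) by apply ok12_num.
    assert (A1 : |- fimp (flt s m) (flt s (tsucc m))).
    { pose proof (lt_def s m Hs Hm).
      assert (E : |- fimp (feq (tplus s (tsucc (tvar 2))) m) (flt s (tsucc m))).
      { pose proof (ax_plusS s (tsucc (tvar 2))).
        pose proof (eq_succ (tplus s (tsucc (tvar 2))) m).
        pose proof (eq_trans (tplus s (tsucc (tsucc (tvar 2)))) (tsucc (tplus s (tsucc (tvar 2)))) (tsucc m)).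
        pose proof (lt_intro s (tsucc (tvar 2)) (tsucc m) Hs ltac:(destruct Hm; split; simpl; auto)).
        tcomb H0; tcomb H1; tcomb H2; tcomb H3; taut. }
      apply ex_elim with (x := 2) in E. 2:{ simpl. destruct Hs, Hm. rewrite H1, H3. auto. }
      tcomb H; tcomb E; taut. }
    assert (A2 : |- fimp (feq s m) (flt s (tsucc m))).
    { pose proof (ax_plusS s tzero). pose proof (ax_plus0 s).
      pose proof (eq_succ (tplus s tzero) s). pose proof (eq_succ s m).
      pose proof (eq_trans (tplus s (tsucc tzero)) (tsucc (tplus s tzero)) (tsucc s)).
      pose proof (eq_trans (tplus s (tsucc tzero)) (tsucc s) (tsucc m)).
      pose proof (lt_intro s tzero (tsucc m) Hs ltac:(destruct Hm; split; simpl; auto)).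
      tcomb H; tcomb H0; tcomb H1; tcomb H2; tcomb H3; tcomb H4; tcomb H5; taut. }
    assert (A3 : |- fimp (flt m s) (for_ (feq s (tsucc m)) (flt (tsucc m) s))).
    { pose proof (lt_def m s Hm Hs).
      set (x := tvar 2).
      set (B := for_ (feq s (tsucc m)) (flt (tsucc m) s)).
      assert (E : |- fimp (feq (tplus m (tsucc x)) s) B).
      { pose proof (zcase x v ltac:(reflexivity)) as Z.
        pose proof (tcong 2 (tvar 2) tzero (tplus m (tsucc (tvar 2)))) as C0. simpl in C0.
        pose proof Hm as [Hm1 Hm2]. repeat rewrite subst_t_noocc in C0 by assumption.
        pose proof (ax_plusS m tzero). pose proof (ax_plus0 m). pose proof (eq_succ (tplus m tzero) m).
        pose proof (eq_sym (tplus m (tsucc x)) (tplus m (tsucc tzero))).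
        pose proof (eq_trans (tplus m (tsucc tzero)) (tplus m (tsucc x)) s).
        pose proof (eq_sym (tplus m (tsucc tzero)) (tsucc (tplus m tzero))).
        pose proof (eq_trans (tsucc (tplus m tzero)) (tplus m (tsucc tzero)) s).
        pose proof (eq_sym (tsucc (tplus m tzero)) (tsucc m)).
        pose proof (eq_trans (tsucc m) (tsucc (tplus m tzero)) s).
        pose proof (eq_sym (tsucc m) s).
        assert (CS : |- fimp (fex v (feq x (tsucc (tvar v)))) (fimp (feq (tplus m (tsucc x)) s) B)).
        { apply ex_elim.
          { unfold B, for_, m; simpl. rewrite ?(num_closed n v), Hvs. auto. }
          pose proof (tcong 2 (tvar 2) (tsucc (tvar v)) (tplus m (tsucc (tvar 2)))) as C1. simpl in C1.
          repeat rewrite subst_t_noocc in C1 by assumption.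
          pose proof (succ_plus_swap m (tsucc (tvar v))).
          pose proof (eq_sym (tplus m (tsucc x)) (tplus m (tsucc (tsucc (tvar v))))).
          pose proof (eq_trans (tplus m (tsucc (tsucc (tvar v)))) (tplus m (tsucc x)) s).
          pose proof (eq_trans (tplus (tsucc m) (tsucc (tvar v))) (tplus m (tsucc (tsucc (tvar v)))) s).
          pose proof (lt_intro (tsucc m) (tvar v) s ltac:(destruct Hm; split; simpl; auto) Hs).
          tcomb C1; tcomb H10; tcomb H11; tcomb H12; tcomb H13; tcomb H14. unfold B. taut. }
        tcomb Z; tcomb C0; tcomb H0; tcomb H1; tcomb H2; tcomb H3; tcomb H4; tcomb H5; tcomb H6;
        tcomb H7; tcomb H8; tcomb H9; tcomb CS. unfold B. taut. }
      apply ex_elim with (x := 2) in E. 2:{ unfold B, for_; simpl. destruct Hs, Hm. rewrite H1, H3. auto. }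
      tcomb H; tcomb E; unfold B; taut. }
    tcomb IHn; tcomb A1; tcomb A2; tcomb A3; taut.
Qed.

Lemma ball_intro z psi n : z <> 1 -> z <> 2 ->
  (forall i, i < n -> |- subst z (num i) psi) ->
  |- fall z (fimp (flt (tvar z) (num n)) psi).
Proof.
  intros Z1 Z2 H. apply gen.
  assert (Hz : ok12 (tvar z)) by (split; unfold occurs_t; apply Nat.eqb_neq; lia).
  induction n.
  - pose proof (not_lt0 (tvar z) Hz). simpl. tcomb H0; taut.
  - pose proof (lt_succ (tvar z) (num n) Hz (ok12_num n)).
    pose proof (leib psi z (num n) (tvar z) (substitutable_closed _ _ _ (num_closed n)) (substitutable_self z psi)).
    rewrite subst_self in H1.
    pose proof (eq_sym (tvar z) (num n)).
    pose proof (H n ltac:(lia)).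
    assert (IH : |- fimp (flt (tvar z) (num n)) psi) by (apply IHn; intros; apply H; lia).
    simpl. tcomb H0; tcomb H1; tcomb H2; tcomb H3; tcomb IH; taut.
Qed.

Lemma ball_refute z psi n i : i < n ->
  |- fneg (subst z (num i) psi) ->
  |- fneg (fall z (fimp (flt (tvar z) (num n)) psi)).
Proof.
  intros Hi H. pose proof (la4 z (num i) (fimp (flt (tvar z) (num n)) psi) (substitutable_closed _ _ _ (num_closed i))).
  simpl in H0. rewrite Nat.eqb_refl, (subst_t_noocc z _ (num n) (num_closed n z)) in H0.
  pose proof (num_lt i n Hi). tcomb H0; tcomb H1; tcomb H; taut.
Qed.


Definition eupd (e : nat -> nat) z n : nat -> nat := fun y => if Nat.eqb y z then n else e y.

Fixpoint sat (e : nat -> nat) (f : form) : Prop :=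
  match f with
  | feq a b => tval e a = tval e b
  | flt a b => tval e a < tval e b
  | fgt a b => tval e a > tval e b
  | fneg g => ~ sat e g
  | fimp g h => sat e g -> sat e h
  | fall z g => forall n, sat (eupd e z n) g
  end.

Lemma tsubst_ext r1 r2 t : (forall y, occurs_t y t = true -> r1 y = r2 y) -> tsubst r1 t = tsubst r2 t.
Proof.
  induction t; simpl; intros H; auto.
  - apply H. apply Nat.eqb_refl.
  - f_equal; auto.
  - f_equal; [apply IHt1|apply IHt2]; intros; apply H; rewrite H0; auto using orb_true_r.
  - f_equal; [apply IHt1|apply IHt2]; intros; apply H; rewrite H0; auto using orb_true_r.
Qed.

Lemma fsubst_ext f : forall r1 r2, (forall y, free_in y f = true -> r1 y = r2 y) -> fsubst r1 f = fsubst r2 f.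
Proof.
  induction f; simpl; intros r1 r2 H;
  try (f_equal; apply tsubst_ext; intros; apply H; rewrite H0; auto using orb_true_r; fail).
  - f_equal; auto.
  - f_equal; [apply IHf1|apply IHf2]; intros; apply H; rewrite H0; auto using orb_true_r.
  - f_equal. apply IHf. intros y Hy. unfold upd. destruct (Nat.eqb_spec y n); auto.
    apply H. apply andb_true_iff; split; auto. apply negb_true_iff, Nat.eqb_neq; auto.
Qed.

Lemma tsubst_id t : tsubst tvar t = t.
Proof. induction t; simpl; f_equal; auto. Qed.

Lemma fsubst_id f : fsubst tvar f = f.
Proof.
  induction f; simpl; f_equal; auto using tsubst_id.
  rewrite <- IHf at 2. apply fsubst_ext. intros y _. unfold upd. destruct (Nat.eqb_spec y n); subst; auto.
Qed.

Lemma subst_t_tsubst z u r t : r z = tvar z -> (forall y, y <> z -> occurs_t z (r y) = false) ->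
  subst_t z u (tsubst r t) = tsubst (upd r z u) t.
Proof.
  intros Hz Hy. induction t; simpl; f_equal; auto.
  unfold upd. destruct (Nat.eqb_spec n z).
  - subst. rewrite Hz. simpl. rewrite Nat.eqb_refl. auto.
  - apply subst_t_noocc. auto.
Qed.

Lemma subst_fsubst g : forall z u r, r z = tvar z -> (forall y, y <> z -> occurs_t z (r y) = false) ->
  subst z u (fsubst r g) = fsubst (upd r z u) g.
Proof.
  induction g; simpl; intros z u r Hz Hy; try (f_equal; apply subst_t_tsubst; auto; fail).
  - f_equal; auto.
  - f_equal; auto.
  - destruct (Nat.eqb_spec z n).
    + subst. f_equal. apply fsubst_ext. intros y _. unfold upd. destruct (Nat.eqb_spec y n); auto.
    + f_equal. rewrite IHg.
      * apply fsubst_ext. intros y _. unfold upd.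
        destruct (Nat.eqb_spec y z), (Nat.eqb_spec y n); subst; auto; congruence.
      * unfold upd. destruct (Nat.eqb_spec z n); [congruence|auto].
      * intros y Hyz. unfold upd. destruct (Nat.eqb_spec y n); simpl; auto.
        apply Nat.eqb_neq. congruence.
Qed.

Lemma subst_as_fsubst z u f : closed_t u -> subst z u f = fsubst (upd tvar z u) f.
Proof.
  intros C. rewrite <- (fsubst_id f) at 1. apply subst_fsubst; auto.
  intros y Hy. simpl. apply Nat.eqb_neq. auto.
Qed.

Lemma tval_ext e1 e2 t : (forall y, occurs_t y t = true -> e1 y = e2 y) -> tval e1 t = tval e2 t.
Proof.
  induction t; simpl; intros H; auto.
  - apply H, Nat.eqb_refl.
  - rewrite IHt1, IHt2; auto; intros; apply H; rewrite H0; auto using orb_true_r.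
  - rewrite IHt1, IHt2; auto; intros; apply H; rewrite H0; auto using orb_true_r.
Qed.

Lemma sat_ext f : forall e1 e2, (forall y, free_in y f = true -> e1 y = e2 y) -> (sat e1 f <-> sat e2 f).
Proof.
  induction f; simpl; intros e1 e2 H;
  try (rewrite (tval_ext e1 e2 t), (tval_ext e1 e2 t0); [tauto| |]; intros; apply H; rewrite H0; auto using orb_true_r; fail).
  - rewrite (IHf e1 e2 H). tauto.
  - rewrite (IHf1 e1 e2), (IHf2 e1 e2). tauto.
    all: intros; apply H; rewrite H0; auto using orb_true_r.
  - split; intros H1 m; [rewrite <- (IHf (eupd e1 n m))|rewrite (IHf (eupd e1 n m) (eupd e2 n m))]; auto.
    all: intros y Hy; unfold eupd; destruct (Nat.eqb_spec y n); auto; apply H;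
      apply andb_true_iff; split; auto; apply negb_true_iff, Nat.eqb_neq; auto.
Qed.

Inductive d0 : form -> Prop :=
| d0eq a b : d0 (feq a b)
| d0lt a b : d0 (flt a b)
| d0neg g : d0 g -> d0 (fneg g)
| d0imp g h : d0 g -> d0 h -> d0 (fimp g h)
| d0ball z t g : occurs_t z t = false -> z <> 1 -> z <> 2 -> d0 g ->
    d0 (fall z (fimp (flt (tvar z) t) g)).

Lemma tsubst_closed e t : closed_t (tsubst (nenv e) t).
Proof.
  induction t; intros y; simpl; auto using num_closed.
  - apply num_closed.
  - rewrite IHt1, IHt2; auto.
  - rewrite IHt1, IHt2; auto.
Qed.

Lemma ok12_closed t : closed_t t -> ok12 t.
Proof. intros C; split; apply C. Qed.

Lemma d0_decide f : d0 f -> forall e,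
  (sat e f -> |- fsubst (nenv e) f) /\ (~ sat e f -> |- fneg (fsubst (nenv e) f)).
Proof.
  induction 1; intros e.
  - simpl. pose proof (tsubst_eval e a) as Ha. pose proof (tsubst_eval e b) as Hb.
    pose proof (eq_sym (tsubst (nenv e) b) (num (tval e b))).
    pose proof (eq_trans (tsubst (nenv e) a) (num (tval e a)) (num (tval e b))).
    pose proof (eq_trans (tsubst (nenv e) a) (num (tval e b)) (tsubst (nenv e) b)).
    pose proof (eq_sym (tsubst (nenv e) a) (num (tval e a))).
    pose proof (eq_trans (num (tval e a)) (tsubst (nenv e) a) (tsubst (nenv e) b)).
    pose proof (eq_trans (num (tval e a)) (tsubst (nenv e) b) (num (tval e b))).
    split; intros Hs.
    + rewrite Hs in *. pose proof (eq_refl' (num (tval e b))).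
      tcomb Ha; tcomb Hb; tcomb H; tcomb H0; tcomb H1; tcomb H5; taut.
    + pose proof (num_neq _ _ Hs).
      tcomb Ha; tcomb Hb; tcomb H2; tcomb H3; tcomb H4; tcomb H5; taut.
  - simpl. pose proof (tsubst_eval e a) as Ha. pose proof (tsubst_eval e b) as Hb.
    set (a' := tsubst (nenv e) a). set (b' := tsubst (nenv e) b).
    assert (Ca : ok12 a') by apply ok12_closed, tsubst_closed.
    assert (Cb : ok12 b') by apply ok12_closed, tsubst_closed.
    pose proof (eq_ltl a' (num (tval e a)) b').
    pose proof (eq_ltr b' (num (tval e b)) (num (tval e a))).
    pose proof (eq_sym a' (num (tval e a))). pose proof (eq_sym b' (num (tval e b))).
    pose proof (eq_ltl (num (tval e a)) a' (num (tval e b))).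
    pose proof (eq_ltr (num (tval e b)) b' a').
    split; intros Hs.
    + pose proof (num_lt _ _ Hs).
      tcomb Ha; tcomb Hb; tcomb H; tcomb H0; tcomb H1; tcomb H2; tcomb H3; tcomb H4; tcomb H5; taut.
    + pose proof (num_nlt (tval e a) (tval e b) ltac:(lia)).
      tcomb Ha; tcomb Hb; tcomb H; tcomb H0; tcomb H1; tcomb H2; tcomb H3; tcomb H4; tcomb H5; taut.
  - simpl. destruct (IHd0 e) as [A B]. split; intros Hs.
    + apply B; auto.
    + apply NNPP in Hs. pose proof (A Hs). tcomb H0. taut.
  - simpl. destruct (IHd0_1 e) as [A1 B1]. destruct (IHd0_2 e) as [A2 B2].
    split; intros Hs.
    + destruct (classic (sat e g)) as [Hg|Hg].
      * pose proof (A2 (Hs Hg)). tcomb H1. taut.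
      * pose proof (B1 Hg). tcomb H1. taut.
    + assert (Hg : sat e g) by tauto. assert (Hh : ~ sat e h) by tauto.
      pose proof (A1 Hg). pose proof (B2 Hh). tcomb H1; tcomb H2; taut.
  -
    set (r := upd (nenv e) z (tvar z)).
    change (fsubst (nenv e) (fall z (fimp (flt (tvar z) t) g))) with
      (fall z (fimp (flt (tsubst r (tvar z)) (tsubst r t)) (fsubst r g))).
    assert (Rz : tsubst r (tvar z) = tvar z) by (simpl; unfold r, upd; rewrite Nat.eqb_refl; auto).
    assert (Rt : tsubst r t = tsubst (nenv e) t).
    { apply tsubst_ext. intros y Hy. unfold r, upd. destruct (Nat.eqb_spec y z); auto. subst; congruence. }
    rewrite Rz, Rt.
    set (t' := tsubst (nenv e) t). set (n := tval e t).
    assert (Et : |- feq t' (num n)) by apply tsubst_eval.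
    assert (Inst : forall i, subst z (num i) (fsubst r g) = fsubst (nenv (eupd e z i)) g).
    { intros i. unfold r. rewrite subst_fsubst.
      - apply fsubst_ext. intros y _. unfold upd, nenv, eupd. destruct (Nat.eqb_spec y z); auto.
      - unfold upd. rewrite Nat.eqb_refl. auto.
      - intros y Hy. unfold upd. destruct (Nat.eqb_spec y z); [congruence|]. apply num_closed. }
    assert (St : forall m, tval (eupd e z m) t = n).
    { intros m. unfold n. apply tval_ext. intros y Hy. unfold eupd. destruct (Nat.eqb_spec y z); auto. subst; congruence. }
    pose proof (eq_ltr t' (num n) (tvar z)) as L1.
    pose proof (eq_sym t' (num n)) as L2.
    pose proof (eq_ltr (num n) t' (tvar z)) as L3.
    split; intros Hs.
    + assert (B : |- fall z (fimp (flt (tvar z) (num n)) (fsubst r g))).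
      { apply ball_intro; auto. intros i Hi. rewrite Inst. apply (IHd0 (eupd e z i)).
        pose proof (Hs i) as H3.
        change (sat (eupd e z i) (flt (tvar z) t) -> sat (eupd e z i) g) in H3.
        apply H3. change (tval (eupd e z i) (tvar z) < tval (eupd e z i) t).
        rewrite St. simpl. unfold eupd. rewrite Nat.eqb_refl. auto. }
      eapply mp. 2: exact B. apply all_mono.
      tcomb Et; tcomb L1; taut.
    + apply not_all_ex_not in Hs as [i Hi].
      change (~ (tval (eupd e z i) (tvar z) < tval (eupd e z i) t -> sat (eupd e z i) g)) in Hi.
      rewrite St in Hi. simpl in Hi. unfold eupd at 1 in Hi. rewrite Nat.eqb_refl in Hi.
      assert (Hi1 : i < n) by tauto. assert (Hi2 : ~ sat (eupd e z i) g) by tauto.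
      pose proof (ball_refute z (fsubst r g) n i Hi1) as R.
      rewrite Inst in R. specialize (R (proj2 (IHd0 _) Hi2)).
      assert (M : |- fimp (fall z (fimp (flt (tvar z) t') (fsubst r g))) (fall z (fimp (flt (tvar z) (num n)) (fsubst r g)))).
      { apply all_mono. tcomb Et; tcomb L2; tcomb L3; taut. }
      tcomb R; tcomb M; taut.
Qed.


Definition cp (a b : nat) : nat := (a + b) * (a + b + 1) / 2 + b.

Lemma tri_even n : exists t, n * (n + 1) = 2 * t.
Proof.
  induction n. exists 0; lia.
  destruct IHn as [t Ht]. exists (t + n + 1). nia.
Qed.

Lemma cp_double a b : 2 * cp a b = (a + b) * (a + b + 1) + 2 * b.
Proof.
  unfold cp. destruct (tri_even (a + b)) as [t Ht]. rewrite Ht.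
  rewrite (Nat.mul_comm 2 t), Nat.div_mul by lia. lia.
Qed.

Lemma cp_inj a b a' b' : cp a b = cp a' b' -> a = a' /\ b = b'.
Proof.
  intros H. pose proof (cp_double a b). pose proof (cp_double a' b').
  assert (a + b = a' + b').
  { destruct (lt_eq_lt_dec (a + b) (a' + b')) as [[L|E]|L]; auto; exfalso.
    - assert ((a + b + 1) * (a + b + 1 + 1) <= (a' + b') * (a' + b' + 1)) by (apply Nat.mul_le_mono; lia). nia.
    - assert ((a' + b' + 1) * (a' + b' + 1 + 1) <= (a + b) * (a + b + 1)) by (apply Nat.mul_le_mono; lia). nia. }
  rewrite H2 in H0. split; nia.
Qed.

Fixpoint fct (n : nat) : nat := match n with 0 => 1 | S m => S m * fct m end.

Lemma fct_pos n : 0 < fct n.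
Proof. induction n; simpl; lia. Qed.

Lemma divide_fct d n : 1 <= d <= n -> Nat.divide d (fct n).
Proof.
  induction n; intros H. lia.
  change (fct (S n)) with (S n * fct n). destruct (Nat.eq_dec d (S n)).
  - subst. exists (fct n). lia.
  - apply Nat.divide_mul_r. apply IHn. lia.
Qed.

Lemma coprime_mul m a b : Nat.gcd m a = 1 -> Nat.gcd m b = 1 -> Nat.gcd m (a * b) = 1.
Proof.
  intros Ha Hb. set (g := Nat.gcd m (a * b)).
  assert (Gm : Nat.divide g m) by apply Nat.gcd_divide_l.
  assert (Gab : Nat.divide g (a * b)) by apply Nat.gcd_divide_r.
  assert (Ga : Nat.gcd g a = 1).
  { apply Nat.divide_1_r. rewrite <- Ha. apply Nat.gcd_greatest.
    - eapply Nat.divide_trans. apply Nat.gcd_divide_l. auto.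
    - apply Nat.gcd_divide_r. }
  assert (Gb : Nat.divide g b) by (eapply Nat.gauss; eauto).
  apply Nat.divide_1_r. rewrite <- Hb. apply Nat.gcd_greatest; auto.
Qed.

Fixpoint prodl (l : list nat) : nat := match l with [] => 1 | x :: l => x * prodl l end.

Lemma prodl_coprime m l : (forall x, In x l -> Nat.gcd m x = 1) -> Nat.gcd m (prodl l) = 1.
Proof.
  induction l; simpl; intros H.
  - apply Nat.divide_1_r, Nat.gcd_divide_r.
  - apply coprime_mul; auto.
Qed.

Lemma prodl_div l i : i < length l -> Nat.divide (nth i l 0) (prodl l).
Proof.
  revert i; induction l; simpl; intros i Hi. lia.
  destruct i. exists (prodl l). lia.
  apply Nat.divide_mul_r. apply IHl. lia.
Qed.

Lemma prodl_pos l : (forall x, In x l -> 0 < x) -> 0 < prodl l.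
Proof. induction l; simpl; intros H; auto. specialize (H a (or_introl eq_refl)) as H0. assert (0 < prodl l) by auto. nia. Qed.

Lemma crt ms xs : length ms = length xs ->
  (forall i, i < length ms -> nth i xs 0 < nth i ms 0) ->
  (forall i j, i < length ms -> j < length ms -> i <> j -> Nat.gcd (nth i ms 0) (nth j ms 0) = 1) ->
  exists a, forall i, i < length ms -> a mod (nth i ms 0) = nth i xs 0.
Proof.
  revert xs; induction ms as [|m ms IH]; intros xs Hl Hx Hc.
  - exists 0. simpl; intros; lia.
  - destruct xs as [|x xs]; simpl in Hl; [lia|].
    destruct (IH xs ltac:(lia)) as [a' Ha'].
    { intros i Hi. apply (Hx (S i)). simpl; lia. }
    { intros i j Hi Hj Hij. apply (Hc (S i) (S j)); simpl; lia. }
    assert (Hm : 0 < m) by (pose proof (Hx 0 ltac:(simpl; lia)); simpl in H; lia).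
    assert (HxM : x < m) by (apply (Hx 0); simpl; lia).
    assert (Pos : forall y, In y ms -> 0 < y).
    { intros y Hy. apply In_nth with (d := 0) in Hy as [i [Hi Ei]]. subst.
      pose proof (Hx (S i) ltac:(simpl; lia)). simpl in H. lia. }
    set (P := prodl ms).
    assert (HP : 0 < P) by (apply prodl_pos; auto).
    assert (Cop : Nat.gcd P m = 1).
    { rewrite Nat.gcd_comm. apply prodl_coprime. intros y Hy.
      apply In_nth with (d := 0) in Hy as [i [Hi Ei]]. subst.
      apply (Hc 0 (S i)); simpl; lia. }
    destruct (Nat.gcd_bezout_pos P m HP) as [u [v Huv]]. rewrite Cop in Huv.
    set (D := x + m * a' - a').
    assert (HD : D + a' = x + m * a') by (unfold D; nia).
    exists (a' + u * D * P).
    assert (E : a' + u * D * P = x + m * (a' + D * v)).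
    { replace (u * D * P) with (D * (u * P)) by ring. rewrite Huv. nia. }
    intros [|i] Hi; simpl.
    + rewrite E. rewrite (Nat.mul_comm m), Nat.Div0.mod_add. apply Nat.mod_small; auto.
    + destruct (prodl_div ms i ltac:(simpl in Hi; lia)) as [c Hc'].
      fold P in Hc'. rewrite Hc'.
      replace (a' + u * D * (c * nth i ms 0)) with (a' + (u * D * c) * nth i ms 0) by ring.
      rewrite Nat.Div0.mod_add. apply Ha'. simpl in Hi; lia.
Qed.

Definition beta (a b i : nat) : nat := a mod (1 + (i + 1) * b).

Lemma beta_exists (l : list nat) : exists a b, forall i, i < length l -> beta a b i = nth i l 0.
Proof.
  set (N := S (length l + list_sum l)).
  set (b := fct N).
  set (ms := map (fun i => 1 + (i + 1) * b) (seq 0 (length l))).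
  assert (Lms : length ms = length l) by (unfold ms; rewrite length_map, length_seq; auto).
  assert (Nms : forall i, i < length l -> nth i ms 0 = 1 + (i + 1) * b).
  { intros i Hi. unfold ms.
    transitivity (nth i (map (fun i => 1 + (i + 1) * b) (seq 0 (length l))) ((fun i => 1 + (i + 1) * b) 0)).
    apply nth_indep. rewrite length_map, length_seq; auto.
    change (1 + (0 + 1) * b) with ((fun i => 1 + (i + 1) * b) 0).
    rewrite map_nth, seq_nth by auto. auto. }
  assert (Hb : N <= b).
  { unfold b. clear. induction N; simpl; auto. pose proof (fct_pos N). nia. }
  destruct (crt ms l Lms) as [a Ha].
  - intros i Hi. rewrite Lms in Hi. rewrite Nms by auto.
    assert (nth i l 0 <= list_sum l).
    { clear -Hi. revert i Hi; induction l; simpl; intros i Hi. lia. destruct i. lia. specialize (IHl i ltac:(lia)). lia. }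
    unfold N in Hb. nia.
  - intros i j Hi Hj Hij. rewrite Lms in Hi, Hj. rewrite !Nms by auto.
    set (g := Nat.gcd (1 + (i + 1) * b) (1 + (j + 1) * b)).
    assert (G1 : Nat.divide g (1 + (i + 1) * b)) by apply Nat.gcd_divide_l.
    assert (G2 : Nat.divide g (1 + (j + 1) * b)) by apply Nat.gcd_divide_r.
    assert (Gd : forall i j, i < j -> Nat.divide g (1 + (i + 1) * b) -> Nat.divide g (1 + (j + 1) * b) -> Nat.divide g (j - i)).
    { intros i' j' L D1 D2.
      apply Nat.divide_mul_l with (p := j' + 1) in D1. apply Nat.divide_mul_l with (p := i' + 1) in D2.
      pose proof (Nat.divide_sub_r _ _ _ D1 D2) as H.
      assert (E : (1 + (i' + 1) * b) * (j' + 1) - (1 + (j' + 1) * b) * (i' + 1) = j' - i') by nia.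
      rewrite E in H. auto. }
    assert (Gdiff : exists d, 1 <= d <= N /\ Nat.divide g d).
    { destruct (Nat.lt_total i j) as [L|[E|L]]; [| congruence |].
      - exists (j - i). split. unfold N; lia. apply Gd; auto.
      - exists (i - j). split. unfold N; lia. apply Gd; auto. }
    destruct Gdiff as [d [Hd Gd']].
    assert (Gpos : 0 < g).
    { unfold g. destruct (Nat.eq_dec (Nat.gcd (1 + (i + 1) * b) (1 + (j + 1) * b)) 0) as [E|E]; [|lia].
      apply Nat.gcd_eq_0 in E. lia. }
    assert (Gb : Nat.divide g b).
    { eapply Nat.divide_trans. apply Gd'. apply divide_fct. auto. }
    assert (G3 : Nat.divide g 1).
    { replace 1 with ((1 + (i + 1) * b) - (i + 1) * b) by lia. apply Nat.divide_sub_r; auto.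
      apply Nat.divide_mul_r. auto. }
    apply Nat.divide_1_r in G3. auto.
  - exists a, b. intros i Hi. unfold beta. rewrite <- Nms by auto. apply Ha. lia.
Qed.


Lemma eqb_MM M i j : Nat.eqb (M + i) (M + j) = Nat.eqb i j.
Proof. destruct (Nat.eqb_spec (M+i) (M+j)), (Nat.eqb_spec i j); auto; lia. Qed.

Lemma subst_num z u n : subst_t z u (num n) = num n.
Proof. apply subst_t_noocc, num_closed. Qed.

Lemma occ_num y n : occurs_t y (num n) = false.
Proof. apply num_closed. Qed.

Ltac neqs := repeat (match goal with |- context [Nat.eqb ?a ?b] => rewrite (proj2 (Nat.eqb_neq a b)) by lia end).
Ltac vs := repeat (progress (cbn -[Nat.eqb num cpair]; rewrite ?eqb_MM, ?subst_num, ?occ_num; cbn -[num Nat.eqb cpair]; neqs)).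

Definition ball z t g := fall z (fimp (flt (tvar z) t) g).
Definition bex z t g := fneg (ball z t (fneg g)).
Definition band a b := fand a b.

Definition cpF (z a b : term) : form :=
  feq (tplus z z) (tplus (tplus (tmult (tplus a b) (tsucc (tplus a b))) b) b).

Definition mF (i b : term) := tsucc (tmult (tsucc i) b).

Definition betaF M (a b i r : term) : form :=
  bex (M+18) (tsucc a) (band (feq a (tplus (tmult (tvar (M+18)) (mF i b)) r)) (flt r (mF i b))).

Definition stepF M (a b : term) : form :=
  bex (M+16) (tsucc a) (bex (M+17) (tsucc a)
    (band (betaF M a b (tvar (M+15)) (tvar (M+16)))
      (band (betaF M a b (tsucc (tvar (M+15))) (tvar (M+17)))
            (cpF (tvar (M+17)) (num 2) (tvar (M+16)))))).

Definition condF M (sel : bool) (Ut Yt : term) : form :=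
  let tRA := tvar (M+5) in let tRB := tvar (M+6) in let tA := tvar (M+7) in let tB := tvar (M+8) in
  let tC := tvar (M+9) in let t1 := tvar (M+10) in let t2 := tvar (M+11) in let t3 := tvar (M+12) in
  let t4 := tvar (M+13) in let t5 := tvar (M+14) in
  band (cpF Ut tRA tRB)
  (band (betaF M tA tB tzero (num 1))
  (band (ball (M+15) Ut (stepF M tA tB))
  (band (betaF M tA tB Ut tC)
  (band (cpF t1 (num (cpair 0 (M+0))) tC)
  (band (cpF t2 (num 0) t1)
  (band (cpF t3 t2 (if sel then tRB else tRA))
  (band (cpF t4 (num 4) t3)
  (band (cpF t5 (num (M+0)) t4)
        (cpF Yt (num 5) t5))))))))).

Definition psiF M sel (Ut Pt Yt : term) : form :=
  let b := tsucc Pt in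
  bex (M+5) b (bex (M+6) b (bex (M+7) b (bex (M+8) b (bex (M+9) b (bex (M+10) b
  (bex (M+11) b (bex (M+12) b (bex (M+13) b (bex (M+14) b (condF M sel Ut Yt)))))))))).

Definition thetaF M sel (Ut Pt : term) : form :=
  bex (M+4) (tsucc Pt) (psiF M sel Ut Pt (tvar (M+4))).

Definition phiF M sel (Ut Pt Vt : term) : form :=
  band (thetaF M sel Ut Pt)
  (band (ball (M+3) Pt (fneg (thetaF M sel Ut (tvar (M+3)))))
  (band (flt Vt (tsucc Pt)) (psiF M sel Ut Pt Vt))).

Definition deltaF M sel (Ut Vt : term) : form := fex (M+2) (phiF M sel Ut (tvar (M+2)) Vt).

Lemma subst_theta M sel z u Ut Pt : z < M + 4 ->
  subst z u (thetaF M sel Ut Pt) = thetaF M sel (subst_t z u Ut) (subst_t z u Pt).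
Proof.
  intros Hz. destruct sel;
  unfold thetaF, psiF, condF, stepF, betaF, ball, bex, band, fand, cpF, mF.
  all: vs; reflexivity.
Qed.

Lemma subst_psi M sel z u Ut Pt Yt : z < M + 5 ->
  subst z u (psiF M sel Ut Pt Yt) = psiF M sel (subst_t z u Ut) (subst_t z u Pt) (subst_t z u Yt).
Proof.
  intros Hz. destruct sel;
  unfold psiF, condF, stepF, betaF, ball, bex, band, fand, cpF, mF.
  all: vs; reflexivity.
Qed.

Lemma subst_phi M sel z u Ut Pt Vt : z < M + 3 ->
  subst z u (phiF M sel Ut Pt Vt) = phiF M sel (subst_t z u Ut) (subst_t z u Pt) (subst_t z u Vt).
Proof.
  intros Hz. unfold phiF, band, fand, ball. cbn -[thetaF psiF Nat.eqb num].
  rewrite !(proj2 (Nat.eqb_neq z (M+3))) by lia. cbn -[thetaF psiF Nat.eqb num].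
  rewrite !subst_theta, subst_psi by lia. cbn -[thetaF psiF Nat.eqb num].
  rewrite !(proj2 (Nat.eqb_neq z (M+3))) by lia. reflexivity.
Qed.

Lemma subst_delta M sel z u Ut Vt : z < M + 2 ->
  subst z u (deltaF M sel Ut Vt) = deltaF M sel (subst_t z u Ut) (subst_t z u Vt).
Proof.
  intros Hz. unfold deltaF, fex. cbn -[phiF Nat.eqb num].
  rewrite !(proj2 (Nat.eqb_neq z (M+2))) by lia. rewrite subst_phi by lia.
  cbn -[phiF Nat.eqb num]. rewrite !(proj2 (Nat.eqb_neq z (M+2))) by lia. reflexivity.
Qed.

Definition avoid (lo : nat) (t : term) := forall w, lo <= w -> occurs_t w t = false.

Lemma avoid_num lo n : avoid lo (num n).
Proof. intros w _. apply num_closed. Qed.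
Lemma avoid_var lo v : v < lo -> avoid lo (tvar v).
Proof. intros H w Hw. simpl. apply Nat.eqb_neq. lia. Qed.
Lemma avoid_succ lo t : avoid lo t -> avoid lo (tsucc t).
Proof. intros H w Hw. simpl. auto. Qed.
Lemma avoid_mono lo lo' t : lo <= lo' -> avoid lo t -> avoid lo' t.
Proof. intros H A w Hw. apply A. lia. Qed.

Ltac fvsplit y M :=
  repeat match goal with
  | |- context [Nat.eqb y (M + ?k)] =>
      destruct (Nat.eqb_spec y (M + k)) as [->|?];
      [ repeat match goal with H : avoid _ _ |- _ => rewrite H by lia end; vs | ]
  end.

Lemma fv_theta M sel Ut Pt y : avoid (M+4) Ut -> avoid (M+4) Pt ->
  free_in y (thetaF M sel Ut Pt) = true -> occurs_t y Ut = true \/ occurs_t y Pt = true.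
Proof.
  intros HU HP. destruct (occurs_t y Ut) eqn:EU; auto. destruct (occurs_t y Pt) eqn:EP; auto.
  destruct sel; unfold thetaF, psiF, condF, stepF, betaF, ball, bex, band, fand, cpF, mF; vs;
  rewrite ?EU, ?EP; vs; fvsplit y M; rewrite ?EU, ?EP; vs; intros; discriminate.
Qed.

Lemma fv_psi M sel Ut Pt Yt y : avoid (M+5) Ut -> avoid (M+5) Pt -> avoid (M+5) Yt ->
  free_in y (psiF M sel Ut Pt Yt) = true -> occurs_t y Ut = true \/ occurs_t y Pt = true \/ occurs_t y Yt = true.
Proof.
  intros HU HP HY. destruct (occurs_t y Ut) eqn:EU; auto. destruct (occurs_t y Pt) eqn:EP; auto.
  destruct (occurs_t y Yt) eqn:EY; auto.
  destruct sel; unfold psiF, condF, stepF, betaF, ball, bex, band, fand, cpF, mF; vs;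
  rewrite ?EU, ?EP, ?EY; vs; fvsplit y M; rewrite ?EU, ?EP, ?EY; vs; intros; discriminate.
Qed.

Lemma fv_phi M sel Ut Pt Vt y : avoid (M+3) Ut -> avoid (M+3) Pt -> avoid (M+3) Vt ->
  free_in y (phiF M sel Ut Pt Vt) = true -> occurs_t y Ut = true \/ occurs_t y Pt = true \/ occurs_t y Vt = true.
Proof.
  intros HU HP HV H. unfold phiF, band, fand, ball in H. cbn -[thetaF psiF] in H.
  repeat rewrite ?orb_true_iff, ?andb_true_iff, ?negb_true_iff in H.
  assert (A3 : forall t, avoid (M+3) t -> avoid (M+4) t) by (intros; apply avoid_mono with (M+3); auto; lia).
  assert (A5 : forall t, avoid (M+3) t -> avoid (M+5) t) by (intros; apply avoid_mono with (M+3); auto; lia).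
  destruct H as [H|[[H1 [[H2|H2]|H2]]|[[H|H]|H]]].
  - apply fv_theta in H; auto; tauto.
  - rewrite H2 in H1; congruence.
  - tauto.
  - apply fv_theta in H2; auto; try (apply avoid_var; lia).
    destruct H2 as [H2|H2]; auto; simpl in H2; congruence.
  - tauto.
  - tauto.
  - apply fv_psi in H; auto; tauto.
Qed.

Lemma d0_ball z t g : occurs_t z t = false -> z <> 1 -> z <> 2 -> d0 g -> d0 (ball z t g).
Proof. intros; constructor; auto. Qed.
Lemma d0_bex z t g : occurs_t z t = false -> z <> 1 -> z <> 2 -> d0 g -> d0 (bex z t g).
Proof. intros; repeat constructor; auto. Qed.
Lemma d0_band a b : d0 a -> d0 b -> d0 (band a b).
Proof. intros; repeat constructor; auto. Qed.
Lemma d0_cpF z a b : d0 (cpF z a b).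
Proof. constructor. Qed.

Ltac d0tac :=
  repeat first [ apply d0_band | apply d0_cpF | apply d0_bex | apply d0_ball | apply d0neg
               | apply d0imp | apply d0eq | apply d0lt ];
  try lia;
  try (vs; repeat match goal with H : avoid _ _ |- _ => rewrite H by lia end; reflexivity).

Lemma d0_beta M a b i r : 3 <= M -> occurs_t (M+18) a = false -> d0 (betaF M a b i r).
Proof. intros. unfold betaF. d0tac. simpl. auto. Qed.

Lemma d0_step M a b : 3 <= M -> avoid (M+5) a -> avoid (M+5) b -> d0 (stepF M a b).
Proof.
  intros. unfold stepF. repeat first [apply d0_band | apply d0_cpF | apply d0_bex | apply d0_beta | apply d0eq | apply d0lt];
  try lia; simpl; try rewrite H0 by lia; auto.
Qed.

Lemma d0_theta M sel Ut Pt : 3 <= M -> avoid (M+4) Ut -> avoid (M+4) Pt -> d0 (thetaF M sel Ut Pt).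
Proof.
  intros. unfold thetaF, psiF, condF.
  repeat first [apply d0_band | apply d0_cpF | apply d0_bex | apply d0_beta | apply d0_ball | apply d0_step | apply d0eq | apply d0lt];
  try lia; try (destruct sel; apply d0_cpF); try (apply avoid_var; lia);
  try (simpl; rewrite ?H0, ?H1 by lia; apply Nat.eqb_neq; lia);
  try (simpl; rewrite ?H0, ?H1 by lia; reflexivity);
  try (vs; apply Nat.eqb_neq; lia).
Qed.

Lemma d0_psi M sel Ut Pt Yt : 3 <= M -> avoid (M+5) Ut -> avoid (M+5) Pt -> avoid (M+5) Yt -> d0 (psiF M sel Ut Pt Yt).
Proof.
  intros. unfold psiF, condF.
  repeat first [apply d0_band | apply d0_cpF | apply d0_bex | apply d0_beta | apply d0_ball | apply d0_step | apply d0eq | apply d0lt];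
  try lia; try (destruct sel; apply d0_cpF); try (apply avoid_var; lia);
  try (simpl; rewrite ?H0, ?H1, ?H2 by lia; apply Nat.eqb_neq; lia);
  try (simpl; rewrite ?H0, ?H1, ?H2 by lia; reflexivity);
  try (vs; apply Nat.eqb_neq; lia).
Qed.

Lemma d0_phi M sel Ut Pt Vt : 3 <= M -> avoid (M+3) Ut -> avoid (M+3) Pt -> avoid (M+3) Vt -> d0 (phiF M sel Ut Pt Vt).
Proof.
  intros. unfold phiF.
  assert (A4 : forall t, avoid (M+3) t -> avoid (M+4) t) by (intros; apply avoid_mono with (M+3); auto; lia).
  assert (A5 : forall t, avoid (M+3) t -> avoid (M+5) t) by (intros; apply avoid_mono with (M+3); auto; lia).
  apply d0_band. apply d0_theta; auto.
  apply d0_band. apply d0_ball; try lia. apply H1; lia. constructor. apply d0_theta; auto. apply avoid_var; lia.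
  apply d0_band. constructor. apply d0_psi; auto.
Qed.

Fixpoint bnd (f : form) : list nat :=
  match f with
  | feq _ _ | flt _ _ | fgt _ _ => []
  | fneg g => bnd g
  | fimp g h => bnd g ++ bnd h
  | fall z g => z :: bnd g
  end.

Lemma substitutable_bnd z t f : (forall w, In w (bnd f) -> occurs_t w t = false) -> substitutable z t f.
Proof.
  induction f; simpl; intros H; auto.
  - split; [apply IHf1|apply IHf2]; intros; apply H; apply in_or_app; auto.
  - right. split; auto.
Qed.

Lemma bnd_theta M sel Ut Pt w : In w (bnd (thetaF M sel Ut Pt)) -> M + 4 <= w.
Proof.
  destruct sel; unfold thetaF, psiF, condF, stepF, betaF, ball, bex, band, fand, cpF, mF; cbn -[Nat.add];
  intros H; repeat (destruct H as [H|H]; [subst; lia|]); destruct H.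
Qed.

Lemma bnd_psi M sel Ut Pt Yt w : In w (bnd (psiF M sel Ut Pt Yt)) -> M + 5 <= w.
Proof.
  destruct sel; unfold psiF, condF, stepF, betaF, ball, bex, band, fand, cpF, mF; cbn -[Nat.add];
  intros H; repeat (destruct H as [H|H]; [subst; lia|]); destruct H.
Qed.


Arguments eupd : simpl never.

Lemma tval_num e n : tval e (num n) = n.
Proof. induction n; simpl; auto. Qed.

Lemma tval_eupd e z n t : occurs_t z t = false -> tval (eupd e z n) t = tval e t.
Proof.
  intros H. apply tval_ext. intros y Hy. unfold eupd. destruct (Nat.eqb_spec y z); auto. subst; congruence.
Qed.

Lemma eupd_same e z n : eupd e z n z = n.
Proof. unfold eupd. rewrite Nat.eqb_refl. auto. Qed.

Lemma sat_band e a b : sat e (band a b) <-> sat e a /\ sat e b.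
Proof. unfold band, fand. simpl. split; [intros H; apply NNPP; tauto | tauto]. Qed.

Lemma sat_ball e z t g : occurs_t z t = false ->
  (sat e (ball z t g) <-> forall n, n < tval e t -> sat (eupd e z n) g).
Proof.
  intros H. unfold ball. simpl.
  split; intros H1 n; specialize (H1 n); rewrite eupd_same, tval_eupd in *; auto.
Qed.

Lemma sat_bex e z t g : occurs_t z t = false ->
  (sat e (bex z t g) <-> exists n, n < tval e t /\ sat (eupd e z n) g).
Proof.
  intros H. unfold bex. change (~ sat e (ball z t (fneg g)) <-> exists n, n < tval e t /\ sat (eupd e z n) g).
  rewrite sat_ball by auto. simpl. split.
  - intros H1. apply not_all_ex_not in H1 as [n Hn]. exists n. split; [|apply NNPP]; tauto.
  - intros [n [Hn Hs]] H1. exact (H1 n Hn Hs).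
Qed.

Lemma sat_cpF e z a b : sat e (cpF z a b) <-> tval e z = cp (tval e a) (tval e b).
Proof.
  unfold cpF. simpl. pose proof (cp_double (tval e a) (tval e b)).
  replace (S (tval e a + tval e b)) with (tval e a + tval e b + 1) by lia. lia.
Qed.

Lemma sat_beta M e a b i r : occurs_t (M+18) a = false -> occurs_t (M+18) b = false ->
  occurs_t (M+18) i = false -> occurs_t (M+18) r = false ->
  (sat e (betaF M a b i r) <-> tval e r = beta (tval e a) (tval e b) (tval e i)).
Proof.
  intros Ha Hb Hi Hr. unfold betaF. rewrite sat_bex by (simpl; auto).
  unfold beta. simpl tval at 1.
  set (m := 1 + (tval e i + 1) * tval e b).
  split.
  - intros [q [Hq H]]. rewrite sat_band in H. destruct H as [H1 H2]. simpl in H1, H2.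
    rewrite ?eupd_same, ?tval_eupd in H1 by auto. rewrite ?eupd_same, ?tval_eupd in H2 by auto.
    assert (Em : S (tval e b + tval e i * tval e b) = m) by (unfold m; lia). rewrite Em in *.
    apply (Nat.mod_unique _ _ q); lia.
  - intros H. exists (tval e a / m). split.
    + assert (tval e a / m <= tval e a) by (apply Nat.Div0.div_le_upper_bound; unfold m; nia). lia.
    + rewrite sat_band. cbn -[Nat.div Nat.modulo]. rewrite ?eupd_same, ?tval_eupd by auto.
      assert (Em : S (tval e b + tval e i * tval e b) = m) by (unfold m; lia). rewrite Em in *.
      rewrite H. split.
      * pose proof (Nat.div_mod_eq (tval e a) m). change (S ((tval e i + 1) * tval e b)) with m in *. nia.
      * apply Nat.mod_upper_bound. unfold m; lia.
Qed.

Lemma eupd_MM e M i j n : eupd e (M+i) n (M+j) = if Nat.eqb j i then n else e (M+j).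
Proof. unfold eupd. rewrite eqb_MM. auto. Qed.

Ltac ev := repeat (cbn [tval] in *; rewrite ?eupd_MM, ?tval_num in *; cbn [Nat.eqb] in *).

Lemma occ_var_MM M i j : occurs_t (M+i) (tvar (M+j)) = Nat.eqb i j.
Proof. simpl. apply eqb_MM. Qed.

Ltac occs := cbn [occurs_t orb]; rewrite ?eqb_MM, ?occ_num; try reflexivity;
  repeat match goal with H : avoid _ _ |- _ => rewrite H by lia end; try reflexivity.

Lemma sat_step M e : sat e (stepF M (tvar (M+7)) (tvar (M+8))) <->
  exists r1, r1 < S (e (M+7)) /\ exists r2, r2 < S (e (M+7)) /\
    r1 = beta (e (M+7)) (e (M+8)) (e (M+15)) /\ r2 = beta (e (M+7)) (e (M+8)) (S (e (M+15))) /\ r2 = cp 2 r1.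
Proof.
  unfold stepF. rewrite sat_bex by occs. ev.
  split; intros [r1 [H1 H]]; exists r1; split; auto.
  - rewrite sat_bex in H by occs. ev. destruct H as [r2 [H2 H]]. exists r2; split; auto.
    rewrite !sat_band, !sat_beta, sat_cpF in H by occs. ev. tauto.
  - destruct H as [r2 [H2 H]]. rewrite sat_bex by occs. ev. exists r2; split; auto.
    rewrite !sat_band, !sat_beta, sat_cpF by occs. ev. tauto.
Qed.

Definition CondM M (sel : bool) (u y rA rB a b c s1 s2 s3 s4 s5 : nat) : Prop :=
  u = cp rA rB /\ 1 = beta a b 0 /\
  (forall i, i < u -> exists r1, r1 < S a /\ exists r2, r2 < S a /\
     r1 = beta a b i /\ r2 = beta a b (S i) /\ r2 = cp 2 r1) /\
  c = beta a b u /\ s1 = cp (cpair 0 (M+0)) c /\ s2 = cp 0 s1 /\ s3 = cp s2 (if sel then rB else rA) /\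
  s4 = cp 4 s3 /\ s5 = cp (M+0) s4 /\ y = cp 5 s5.

Lemma sat_cond M sel e Ut Yt : avoid (M+15) Ut -> avoid (M+15) Yt ->
  (sat e (condF M sel Ut Yt) <-> CondM M sel (tval e Ut) (tval e Yt) (e (M+5)) (e (M+6)) (e (M+7)) (e (M+8))
     (e (M+9)) (e (M+10)) (e (M+11)) (e (M+12)) (e (M+13)) (e (M+14))).
Proof.
  intros HU HY. unfold condF, CondM.
  rewrite !sat_band, !sat_cpF, !sat_beta by occs. rewrite sat_ball by occs.
  assert (Hs : forall n, sat (eupd e (M+15) n) (stepF M (tvar (M+7)) (tvar (M+8))) <->
     exists r1, r1 < S (e (M+7)) /\ exists r2, r2 < S (e (M+7)) /\
    r1 = beta (e (M+7)) (e (M+8)) n /\ r2 = beta (e (M+7)) (e (M+8)) (S n) /\ r2 = cp 2 r1).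
  { intros n. rewrite sat_step. ev. tauto. }
  destruct sel; ev; simpl tval; ev.
  all: split; intros H; repeat destruct H as [? H]; repeat split; auto;
    try (intros n Hn; apply Hs; auto); try (intros n Hn; apply <- Hs; auto).
Qed.

Definition PsiM M sel (u p y : nat) : Prop :=
  exists rA, rA < S p /\ exists rB, rB < S p /\ exists a, a < S p /\ exists b, b < S p /\
  exists c, c < S p /\ exists s1, s1 < S p /\ exists s2, s2 < S p /\ exists s3, s3 < S p /\
  exists s4, s4 < S p /\ exists s5, s5 < S p /\ CondM M sel u y rA rB a b c s1 s2 s3 s4 s5.

Definition ThetaM M sel (u p : nat) : Prop := exists y, y < S p /\ PsiM M sel u p y.

Ltac avd := match goal with H : avoid _ ?t |- occurs_t _ ?t = false => apply H; lia end.

Lemma sat_psi M sel e Ut Pt Yt : avoid (M+5) Ut -> avoid (M+5) Pt -> avoid (M+5) Yt ->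
  (sat e (psiF M sel Ut Pt Yt) <-> PsiM M sel (tval e Ut) (tval e Pt) (tval e Yt)).
Proof.
  intros HU HP HY. unfold psiF, PsiM.
  assert (A15 : forall t, avoid (M+5) t -> avoid (M+15) t) by (intros; apply avoid_mono with (M+5); auto; lia).
  split; intros H.
  - repeat (rewrite sat_bex in H by occs; let x := fresh "x" in let Hx := fresh "Hx" in destruct H as [x [Hx H]]).
    rewrite sat_cond in H by auto.
    repeat rewrite tval_eupd in * by avd. ev. cbn [tval] in *. repeat rewrite tval_eupd in * by avd.
    exists x; split; auto. exists x0; split; auto. exists x1; split; auto. exists x2; split; auto.
    exists x3; split; auto. exists x4; split; auto. exists x5; split; auto. exists x6; split; auto.
    exists x7; split; auto. exists x8; split; auto.
  - destruct H as [x [Hx [x0 [Hx0 [x1 [Hx1 [x2 [Hx2 [x3 [Hx3 [x4 [Hx4 [x5 [Hx5 [x6 [Hx6 [x7 [Hx7 [x8 [Hx8 H]]]]]]]]]]]]]]]]]]]].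
    rewrite sat_bex by occs; exists x; split; [cbn [tval]; auto|].
    rewrite sat_bex by occs; exists x0; split; [cbn [tval]; repeat rewrite tval_eupd by avd; auto|].
    rewrite sat_bex by occs; exists x1; split; [cbn [tval]; repeat rewrite tval_eupd by avd; auto|].
    rewrite sat_bex by occs; exists x2; split; [cbn [tval]; repeat rewrite tval_eupd by avd; auto|].
    rewrite sat_bex by occs; exists x3; split; [cbn [tval]; repeat rewrite tval_eupd by avd; auto|].
    rewrite sat_bex by occs; exists x4; split; [cbn [tval]; repeat rewrite tval_eupd by avd; auto|].
    rewrite sat_bex by occs; exists x5; split; [cbn [tval]; repeat rewrite tval_eupd by avd; auto|].
    rewrite sat_bex by occs; exists x6; split; [cbn [tval]; repeat rewrite tval_eupd by avd; auto|].
    rewrite sat_bex by occs; exists x7; split; [cbn [tval]; repeat rewrite tval_eupd by avd; auto|].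
    rewrite sat_bex by occs; exists x8; split; [cbn [tval]; repeat rewrite tval_eupd by avd; auto|].
    rewrite sat_cond by auto.
    repeat rewrite tval_eupd by avd. ev. exact H.
Qed.

Lemma sat_theta M sel e Ut Pt : avoid (M+4) Ut -> avoid (M+4) Pt ->
  (sat e (thetaF M sel Ut Pt) <-> ThetaM M sel (tval e Ut) (tval e Pt)).
Proof.
  intros HU HP. unfold thetaF, ThetaM.
  assert (A5 : forall t, avoid (M+4) t -> avoid (M+5) t) by (intros; apply avoid_mono with (M+4); auto; lia).
  rewrite sat_bex by occs. cbn [tval].
  split; intros [y [Hy H]]; exists y; split; auto.
  - rewrite sat_psi in H; auto; [|apply avoid_var; lia]. rewrite !tval_eupd in H by avd. ev. auto.
  - rewrite sat_psi; auto; [|apply avoid_var; lia]. rewrite !tval_eupd by avd. ev. auto.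
Qed.


Lemma cp_cpair a b : cp a b = cpair a b.
Proof. reflexivity. Qed.

Definition Gv M (sel : bool) (rA rB u : nat) : nat :=
  cp 5 (cp (M+0) (cp 4 (cp (cp 0 (cp (cpair 0 (M+0)) (code_t (num u)))) (if sel then rB else rA)))).

Lemma code_num0 : code_t (num 0) = 1.
Proof. reflexivity. Qed.

Lemma CondM_unique M sel u y rA rB a b c s1 s2 s3 s4 s5 rA0 rB0 :
  u = cp rA0 rB0 -> CondM M sel u y rA rB a b c s1 s2 s3 s4 s5 -> y = Gv M sel rA0 rB0 u.
Proof.
  intros Hu [H1 [H2 [H3 [H4 [H5 [H6 [H7 [H8 [H9 H10]]]]]]]]].
  rewrite Hu in H1. apply cp_inj in H1 as [<- <-].
  assert (T : forall i, i <= u -> beta a b i = code_t (num i)).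
  { induction i; intros Hi. rewrite <- H2. reflexivity.
    destruct (H3 i ltac:(lia)) as [r1 [_ [r2 [_ [E1 [E2 E3]]]]]].
    rewrite <- E2, E3, E1, IHi by lia. reflexivity. }
  unfold Gv. rewrite <- T by lia. rewrite <- H4. subst. reflexivity.
Qed.

Lemma PsiM_unique M sel u p y rA0 rB0 : u = cp rA0 rB0 -> PsiM M sel u p y -> y = Gv M sel rA0 rB0 u.
Proof.
  intros Hu H. unfold PsiM in H.
  destruct H as [x [Hx [x0 [Hx0 [x1 [Hx1 [x2 [Hx2 [x3 [Hx3 [x4 [Hx4 [x5 [Hx5 [x6 [Hx6 [x7 [Hx7 [x8 [Hx8 H]]]]]]]]]]]]]]]]]]]].
  eapply CondM_unique; eauto.
Qed.

Lemma beta_le a b i : beta a b i <= a.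
Proof. unfold beta. apply Nat.Div0.mod_le. Qed.

Lemma ThetaM_exists M sel rA rB : exists p, ThetaM M sel (cp rA rB) p.
Proof.
  set (k := cp rA rB).
  destruct (beta_exists (map (fun i => code_t (num i)) (seq 0 (S k)))) as [a [b Hab]].
  rewrite length_map, length_seq in Hab.
  assert (Hb : forall i, i <= k -> beta a b i = code_t (num i)).
  { intros i Hi. rewrite Hab by lia.
    transitivity (nth i (map (fun i => code_t (num i)) (seq 0 (S k))) ((fun i => code_t (num i)) 0)).
    apply nth_indep. rewrite length_map, length_seq; lia.
    change (code_t (num 0)) with ((fun i => code_t (num i)) 0).
    rewrite map_nth, seq_nth by lia. reflexivity. }
  set (c := code_t (num k)).
  set (s1 := cp (cpair 0 (M+0)) c). set (s2 := cp 0 s1). set (s3 := cp s2 (if sel then rB else rA)).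
  set (s4 := cp 4 s3). set (s5 := cp (M+0) s4). set (y := cp 5 s5).
  exists (y + rA + rB + a + b + c + s1 + s2 + s3 + s4 + s5).
  exists y. split. lia.
  exists rA. split. lia. exists rB. split. lia. exists a. split. lia. exists b. split. lia.
  exists c. split. lia. exists s1. split. lia. exists s2. split. lia. exists s3. split. lia.
  exists s4. split. lia. exists s5. split. lia.
  unfold CondM. repeat split; auto.
  - rewrite Hb by lia. reflexivity.
  - intros i Hi. exists (beta a b i). split. pose proof (beta_le a b i); lia.
    exists (beta a b (S i)). split. pose proof (beta_le a b (S i)); lia.
    repeat split; auto. rewrite !Hb by lia. reflexivity.
  - unfold c. rewrite Hb by lia. reflexivity.
Qed.

Lemma least_ex (P : nat -> Prop) : (exists n, P n) -> exists n, P n /\ forall m, m < n -> ~ P m.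
Proof.
  intros [n Hn]. induction n as [n IH] using (well_founded_induction lt_wf).
  destruct (classic (exists m, m < n /\ P m)) as [[m [Hm Pm]]|H].
  - apply (IH m Hm Pm).
  - exists n. split; auto. intros m Hm Pm. apply H. eauto.
Qed.


Arguments eupd : simpl never.

Definition closedF f := forall y, free_in y f = false.

Lemma fsubst_closedF r f : closedF f -> fsubst r f = f.
Proof.
  intros C. rewrite <- (fsubst_id f) at 2. apply fsubst_ext. intros y Hy. rewrite C in Hy. discriminate.
Qed.

Lemma d0_prove f : d0 f -> closedF f -> sat (fun _ => 0) f -> |- f.
Proof. intros D C S. pose proof (proj1 (d0_decide f D (fun _ => 0)) S). rewrite fsubst_closedF in H; auto. Qed.

Lemma d0_refute f : d0 f -> closedF f -> ~ sat (fun _ => 0) f -> |- fneg f.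
Proof. intros D C S. pose proof (proj2 (d0_decide f D (fun _ => 0)) S). rewrite fsubst_closedF in H; auto. Qed.

Lemma closed_theta M sel k i : closedF (thetaF M sel (num k) (num i)).
Proof.
  intros y. destruct (free_in y _) eqn:E; auto. apply fv_theta in E; try apply avoid_num.
  rewrite !occ_num in E. intuition discriminate.
Qed.

Lemma closed_psi M sel k i j : closedF (psiF M sel (num k) (num i) (num j)).
Proof.
  intros y. destruct (free_in y _) eqn:E; auto. apply fv_psi in E; try apply avoid_num.
  rewrite !occ_num in E. intuition discriminate.
Qed.

Lemma closed_phi M sel k i j : closedF (phiF M sel (num k) (num i) (num j)).
Proof.
  intros y. destruct (free_in y _) eqn:E; auto. apply fv_phi in E; try apply avoid_num.
  rewrite !occ_num in E. intuition discriminate.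
Qed.

Lemma subst_t_var_same z u : subst_t z u (tvar z) = u.
Proof. simpl. rewrite Nat.eqb_refl. auto. Qed.
Lemma subst_t_var_diff z u w : z <> w -> subst_t z u (tvar w) = tvar w.
Proof. intros H. simpl. apply Nat.eqb_neq in H. rewrite H. auto. Qed.


Lemma delta_props M sel rA0 rB0 : 3 <= M ->
  |- deltaF M sel (num (cp rA0 rB0)) (num (Gv M sel rA0 rB0 (cp rA0 rB0))) /\
  |- fimp (deltaF M sel (num (cp rA0 rB0)) (tvar (M+1))) (feq (tvar (M+1)) (num (Gv M sel rA0 rB0 (cp rA0 rB0)))).
Proof.
  intros HM.
  set (k := cp rA0 rB0). set (N := Gv M sel rA0 rB0 k).
  destruct (least_ex _ (ThetaM_exists M sel rA0 rB0)) as [P [HP Hmin]]. fold k in HP, Hmin.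
  assert (HN : N < S P /\ PsiM M sel k P N).
  { destruct HP as [y [Hy Hps]]. pose proof (PsiM_unique M sel k P y rA0 rB0 eq_refl Hps). subst y. auto. }
  assert (K2 : |- thetaF M sel (num k) (num P)).
  { apply d0_prove. apply d0_theta; auto; apply avoid_num. apply closed_theta.
    rewrite sat_theta by apply avoid_num. rewrite !tval_num. auto. }
  assert (K1 : |- fall (M+3) (fimp (flt (tvar (M+3)) (num P)) (fneg (thetaF M sel (num k) (tvar (M+3)))))).
  { apply ball_intro; try lia. intros i Hi. cbn [subst]. rewrite subst_theta by lia.
    rewrite !subst_num, subst_t_var_same.
    apply d0_refute. apply d0_theta; auto; apply avoid_num. apply closed_theta.
    rewrite sat_theta by apply avoid_num. rewrite !tval_num. auto. }
  assert (K3 : |- fall (M+1) (fimp (flt (tvar (M+1)) (num (S P)))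
                  (fimp (psiF M sel (num k) (num P) (tvar (M+1))) (feq (tvar (M+1)) (num N))))).
  { apply ball_intro; try lia. intros i Hi. cbn [subst]. rewrite subst_psi by lia.
    rewrite !subst_num, !subst_t_var_same.
    destruct (Nat.eq_dec i N) as [->|Hne].
    - pose proof (eq_refl' (num N)). tcomb H. taut.
    - assert (R : |- fneg (psiF M sel (num k) (num P) (num i))).
      { apply d0_refute. apply d0_psi; auto; apply avoid_num. apply closed_psi.
        rewrite sat_psi by apply avoid_num. rewrite !tval_num. intros H.
        apply (PsiM_unique M sel k P i rA0 rB0 eq_refl) in H. auto. }
      tcomb R. taut. }
  split.
  - unfold deltaF. eapply mp. apply (ex_intro (M+2) (num P)). apply substitutable_closed, num_closed.
    rewrite subst_phi by lia. rewrite !subst_num, subst_t_var_same.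
    apply d0_prove. apply d0_phi; auto; apply avoid_num. apply closed_phi.
    unfold phiF. rewrite !sat_band. rewrite sat_theta by apply avoid_num. rewrite sat_ball by apply occ_num.
    rewrite sat_psi by apply avoid_num. cbn [sat tval]. rewrite !tval_num. repeat split; auto; try tauto.
    intros n Hn. rewrite sat_theta by (try apply avoid_num; apply avoid_var; lia).
    rewrite tval_num. cbn [tval]. rewrite eupd_same. auto.
  -
    set (p := tvar (M+2)). set (v := tvar (M+1)).
    set (Th := thetaF M sel (num k) p).
    set (Bq := ball (M+3) p (fneg (thetaF M sel (num k) (tvar (M+3))))).
    set (Lt := flt v (tsucc p)).
    set (Ps := psiF M sel (num k) p v).
    assert (Hp : ok12 p) by (unfold p, ok12; split; unfold occurs_t; apply Nat.eqb_neq; lia).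
    pose proof (trich p P Hp) as T.
    assert (F1 : |- fimp (flt p (num P)) (fneg Th)).
    { pose proof (la4 (M+3) p (fimp (flt (tvar (M+3)) (num P)) (fneg (thetaF M sel (num k) (tvar (M+3)))))) as L.
      assert (S1 : substitutable (M+3) p (fimp (flt (tvar (M+3)) (num P)) (fneg (thetaF M sel (num k) (tvar (M+3)))))).
      { apply substitutable_bnd. intros w Hw. cbn [bnd app] in Hw. apply bnd_theta in Hw. unfold p, occurs_t. apply Nat.eqb_neq. lia. }
      specialize (L S1). cbn [subst] in L. rewrite subst_theta in L by lia.
      rewrite !subst_num, subst_t_var_same in L. tcomb L. tcomb K1. unfold Th. taut. }
    assert (F2 : |- fimp Bq (fimp (flt (num P) p) (fneg (thetaF M sel (num k) (num P))))).
    { pose proof (la4 (M+3) (num P) (fimp (flt (tvar (M+3)) p) (fneg (thetaF M sel (num k) (tvar (M+3))))) (substitutable_closed _ _ _ (num_closed P))) as L.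
      cbn [subst] in L. rewrite subst_theta in L by lia.
      rewrite !subst_num, subst_t_var_same in L. unfold p in L. rewrite subst_t_var_diff in L by lia.
      unfold Bq, ball. exact L. }
    assert (F3 : |- fimp (feq p (num P)) (fimp (band Lt Ps) (band (flt v (tsucc (num P))) (psiF M sel (num k) (num P) v)))).
    { pose proof (leib (band Lt Ps) (M+2) p (num P) (substitutable_self _ _) (substitutable_closed _ _ _ (num_closed P))) as L.
      unfold p in L at 2. rewrite subst_self in L.
      unfold Lt, Ps, band, fand in L. cbn [subst subst_t] in L. rewrite subst_psi in L by lia.
      rewrite !subst_num, subst_t_var_same in L. unfold v, p in L. rewrite !subst_t_var_diff in L by lia.
      exact L. }
    pose proof (mp _ _ (all_elim _ _) K3) as K3'. change (num (S P)) with (tsucc (num P)) in K3'.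
    assert (Main : |- fimp (phiF M sel (num k) p v) (feq v (num N))).
    { unfold phiF. fold Th. fold Bq. fold Lt. fold Ps.
      tcomb T; tcomb F1; tcomb F2; tcomb F3; tcomb K2; tcomb K3'. unfold band. taut. }
    unfold deltaF. apply ex_elim. unfold v, free_in. rewrite occ_num. apply orb_false_iff; split; auto.
    unfold occurs_t. apply Nat.eqb_neq; lia. exact Main.
Qed.


Fixpoint fmx (f : form) : nat :=
  match f with
  | feq a b | flt a b | fgt a b => max (tmax a) (tmax b)
  | fneg g => fmx g
  | fimp g h => max (fmx g) (fmx h)
  | fall z g => max (S z) (fmx g)
  end.

Ltac mxs := repeat match goal with H : Nat.max _ _ <= _ |- _ => apply Nat.max_lub_iff in H as [? ?] end.

Lemma nofree_big f w : fmx f <= w -> free_in w f = false.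
Proof.
  induction f; cbn -[Nat.max]; intros H; mxs; rewrite ?tmax_occ by lia; auto.
  all: try (rewrite IHf1, IHf2 by lia; auto); try (rewrite IHf by lia; apply andb_false_r).
Qed.

Lemma substitutable_big x f w : fmx f <= w -> substitutable x (tvar w) f.
Proof.
  induction f; cbn -[Nat.max]; intros H; mxs; auto.
  all: try (split; [apply IHf1|apply IHf2]; lia); try (right; split; [apply Nat.eqb_neq; lia| apply IHf; lia]).
Qed.

Lemma subst_t_subst_big x w u t : tmax t <= w -> subst_t w u (subst_t x (tvar w) t) = subst_t x u t.
Proof.
  induction t; cbn -[Nat.max]; intros H; mxs; try (f_equal; auto; lia).
  all: try (f_equal; [apply IHt1|apply IHt2]; lia).
  destruct (Nat.eqb_spec x n). simpl. rewrite Nat.eqb_refl. auto.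
  simpl. destruct (Nat.eqb_spec w n); auto. lia.
Qed.

Lemma subst_subst_big x w u f : fmx f <= w -> subst w u (subst x (tvar w) f) = subst x u f.
Proof.
  induction f; cbn -[Nat.max]; intros H; mxs; try (f_equal; apply subst_t_subst_big; lia).
  - f_equal; auto.
  - f_equal; [apply IHf1|apply IHf2]; lia.
  - destruct (Nat.eqb_spec x n).
    + simpl. destruct (Nat.eqb_spec w n); [lia|]. f_equal. apply subst_nofree, nofree_big. lia.
    + simpl. destruct (Nat.eqb_spec w n); [lia|]. f_equal. apply IHf. lia.
Qed.

Lemma occ_subst_t y x t s : occurs_t y (subst_t x t s) = true -> (occurs_t y s = true /\ y <> x) \/ occurs_t y t = true.
Proof.
  induction s; simpl; intros H; try discriminate.
  - destruct (Nat.eqb_spec x n); auto. simpl in H. left. split; auto. apply Nat.eqb_eq in H. lia.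
  - auto.
  - apply orb_true_iff in H as [H|H]; [destruct (IHs1 H)|destruct (IHs2 H)]; auto; left; rewrite orb_true_iff; tauto.
  - apply orb_true_iff in H as [H|H]; [destruct (IHs1 H)|destruct (IHs2 H)]; auto; left; rewrite orb_true_iff; tauto.
Qed.

Lemma fv_subst y x t f : free_in y (subst x t f) = true -> (free_in y f = true /\ y <> x) \/ occurs_t y t = true.
Proof.
  induction f; simpl; intros H;
  try (apply orb_true_iff in H as [H|H]; [destruct (occ_subst_t _ _ _ _ H)|destruct (occ_subst_t _ _ _ _ H)]; auto;
       left; rewrite orb_true_iff; tauto).
  - auto.
  - apply orb_true_iff in H as [H|H]; [destruct (IHf1 H)|destruct (IHf2 H)]; auto; left; rewrite orb_true_iff; tauto.
  - destruct (Nat.eqb_spec x n).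
    + simpl in H. apply andb_true_iff in H as [H1 H2]. left. split. apply andb_true_iff; auto.
      apply negb_true_iff, Nat.eqb_neq in H1. lia.
    + simpl in H. apply andb_true_iff in H as [H1 H2]. destruct (IHf H2); auto. left. split; [|tauto].
      apply andb_true_iff; tauto.
Qed.

Definition restF M sel phi x := fex (M+1) (band (deltaF M sel (tvar (M+0)) (tvar (M+1))) (subst x (tvar (M+1)) phi)).

Lemma phi_closed phi x n : (forall y, free_in y phi = true -> y = x) -> closedF (subst x (num n) phi).
Proof.
  intros Ho y. destruct (free_in y _) eqn:E; auto. apply fv_subst in E as [[E1 E2]|E].
  apply Ho in E1. congruence. rewrite occ_num in E. discriminate.
Qed.

Lemma rest_iff M sel phi x rA0 rB0 : 3 <= M -> fmx phi <= M -> (forall y, free_in y phi = true -> y = x) ->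
  |- fiff (subst (M+0) (num (cp rA0 rB0)) (restF M sel phi x)) (subst x (num (Gv M sel rA0 rB0 (cp rA0 rB0))) phi).
Proof.
  intros HM Hmx Ho.
  destruct (delta_props M sel rA0 rB0 HM) as [DE DU].
  set (k := cp rA0 rB0) in *. set (N := Gv M sel rA0 rB0 k) in *.
  set (phiV := subst x (tvar (M+1)) phi).
  assert (NF0 : free_in (M+0) phiV = false).
  { destruct (free_in (M+0) phiV) eqn:E; auto. apply fv_subst in E as [[E1 E2]|E].
    rewrite nofree_big in E1 by lia. discriminate. simpl in E. apply Nat.eqb_eq in E. lia. }
  assert (E1 : subst (M+0) (num k) (restF M sel phi x) = fex (M+1) (band (deltaF M sel (num k) (tvar (M+1))) phiV)).
  { unfold restF, fex, band, fand. cbn [subst].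
    rewrite (proj2 (Nat.eqb_neq (M+0) (M+1))) by lia.
    rewrite subst_delta by lia. rewrite subst_t_var_same, subst_t_var_diff by lia.
    fold phiV. rewrite (subst_nofree _ _ phiV NF0). reflexivity. }
  rewrite E1. clear E1.
  set (phiN := subst x (num N) phi).
  assert (CN : closedF phiN) by (apply phi_closed; auto).
  assert (L : |- fimp (feq (tvar (M+1)) (num N)) (fimp phiV phiN)).
  { apply leib. apply substitutable_big. lia. apply substitutable_closed, num_closed. }
  assert (A1 : |- fimp (fex (M+1) (band (deltaF M sel (num k) (tvar (M+1))) phiV)) phiN).
  { apply ex_elim. apply CN. tcomb DU; tcomb L. unfold band. taut. }
  assert (A2 : |- fimp phiN (fex (M+1) (band (deltaF M sel (num k) (tvar (M+1))) phiV))).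
  { pose proof (ex_intro (M+1) (num N) (band (deltaF M sel (num k) (tvar (M+1))) phiV) (substitutable_closed _ _ _ (num_closed N))) as X.
    unfold band, fand in X. cbn [subst] in X. rewrite subst_delta in X by lia.
    rewrite !subst_num, subst_t_var_same in X. unfold phiV in X. rewrite subst_subst_big in X by lia.
    fold phiN in X. tcomb X; tcomb DE. unfold band. taut. }
  tcomb A1; tcomb A2; taut.
Qed.

Lemma E_iff z k R : (forall y, free_in y R = true -> y = z) ->
  |- fiff (fall z (fimp (feq (tvar z) (num k)) R)) (subst z (num k) R).
Proof.
  intros Ho.
  pose proof (la4 z (num k) (fimp (feq (tvar z) (num k)) R) (substitutable_closed _ _ _ (num_closed k))) as L.
  cbn [subst] in L. rewrite subst_t_var_same, subst_num in L.
  pose proof (eq_refl' (num k)) as Rf.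
  pose proof (leib R z (num k) (tvar z) (substitutable_closed _ _ _ (num_closed k)) (substitutable_self _ _)) as Lb.
  rewrite subst_self in Lb.
  pose proof (eq_sym (tvar z) (num k)) as Sy.
  assert (B : |- fimp (subst z (num k) R) (fimp (feq (tvar z) (num k)) R)) by (tcomb Lb; tcomb Sy; taut).
  apply all_intro with (x := z) in B.
  - tcomb L; tcomb Rf; tcomb B; taut.
  - destruct (free_in z (subst z (num k) R)) eqn:E; auto. apply fv_subst in E as [[_ E]|E]. congruence.
    rewrite occ_num in E; discriminate.
Qed.

Lemma fv_rest M sel phi x y : 3 <= M -> (forall y, free_in y phi = true -> y = x) ->
  free_in y (restF M sel phi x) = true -> y = M + 0.
Proof.
  intros HM Ho H. unfold restF, fex, band, fand in H. cbn [free_in] in H.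
  repeat rewrite ?orb_true_iff, ?andb_true_iff, ?negb_true_iff, ?orb_false_iff in H.
  destruct H as [H1 [H|H]].
  - unfold deltaF, fex in H. cbn [free_in] in H.
    repeat rewrite ?andb_true_iff, ?negb_true_iff in H. destruct H as [H2 H].
    apply fv_phi in H; try (apply avoid_var; lia).
    apply Nat.eqb_neq in H1. apply Nat.eqb_neq in H2.
    destruct H as [H|[H|H]]; simpl in H; apply Nat.eqb_eq in H; lia.
  - apply fv_subst in H as [[H Hx]|H]. apply Ho in H. congruence.
    apply Nat.eqb_neq in H1. simpl in H. apply Nat.eqb_eq in H. lia.
Qed.


Lemma code_E z t R : code (fall z (fimp (feq (tvar z) t) R)) =
  cpair 5 (cpair z (cpair 4 (cpair (cpair 0 (cpair (cpair 0 z) (code_t t))) (code R)))).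
Proof. reflexivity. Qed.

Lemma sentence_E z k R : (forall y, free_in y R = true -> y = z) -> sentence (fall z (fimp (feq (tvar z) (num k)) R)).
Proof.
  intros H y. cbn [free_in occurs_t]. rewrite occ_num.
  destruct (Nat.eqb_spec y z); auto. simpl.
  destruct (free_in y R) eqn:E; auto. apply H in E. congruence.
Qed.

Theorem mainTheorem1 (phi : form) (x : nat)
  (Hfree : free_in x phi = true)
  (Honly : forall y, free_in y phi = true -> y = x) :
  exists sigma tau : form,
    sentence sigma /\ sentence tau /\
    PA_proves (fiff sigma (subst x (num (code tau)) phi)) /\
    PA_proves (fiff tau (fneg (subst x (num (code sigma)) phi))).
Proof.
  set (M := 3 + fmx phi).
  assert (HM : 3 <= M) by (unfold M; lia).
  assert (Hmx : fmx phi <= M) by (unfold M; lia).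
  set (RA := restF M true phi x). set (RB := fneg (restF M false phi x)).
  set (k := cp (code RA) (code RB)).
  exists (fall (M+0) (fimp (feq (tvar (M+0)) (num k)) RA)), (fall (M+0) (fimp (feq (tvar (M+0)) (num k)) RB)).
  assert (FA : forall y, free_in y RA = true -> y = M + 0) by (intros y Hy; apply (fv_rest M true phi x y HM Honly Hy)).
  assert (FB : forall y, free_in y RB = true -> y = M + 0) by (intros y Hy; apply (fv_rest M false phi x y HM Honly Hy)).
  split; [apply sentence_E; auto|]. split; [apply sentence_E; auto|].
  rewrite !code_E. split.
  - pose proof (E_iff (M+0) k RA FA) as E1.
    pose proof (rest_iff M true phi x (code RA) (code RB) HM Hmx Honly) as E2.
    fold k in E2.
    assert (EN : Gv M true (code RA) (code RB) k = cpair 5 (cpair (M+0) (cpair 4 (cpair (cpair 0 (cpair (cpair 0 (M+0)) (code_t (num k)))) (code RB))))) by reflexivity.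
    rewrite EN in E2. fold RA in E2.
    tcomb E1; tcomb E2; taut.
  - pose proof (E_iff (M+0) k RB FB) as E1.
    pose proof (rest_iff M false phi x (code RA) (code RB) HM Hmx Honly) as E2.
    fold k in E2.
    assert (EN : Gv M false (code RA) (code RB) k = cpair 5 (cpair (M+0) (cpair 4 (cpair (cpair 0 (cpair (cpair 0 (M+0)) (code_t (num k)))) (code RA))))) by reflexivity.
    rewrite EN in E2.
    unfold RB in E1 at 2. cbn [subst] in E1.
    tcomb E1; tcomb E2; taut.
Qed.
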